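(* Let $n\in\mathbb{Z}$ with $|n|\geq1$, $\alpha>0$, $R>0$ and $-\frac{r_0^2+n^2}{2R^2}<\kappa<\alpha^{-1}-\frac{r_0^2+n^2}{2R^2}$. Then there exists a constant $C_2>0$ such that $\langle\gamma_\kappa'(u),u\rangle<-C_2<0$ for all $u\in\mathcal{M}$.
   Context: $r_0\approx2.404825$ is the first positive zero of the Bessel function $J_0$. $H$ is the completion of $\{u\in C^1[0,R]: u(0)=0=u(R)\}$ with respect to the inner product $(u,\tilde u)=\int_0^R\{ru_r\tilde u_r+\frac1r u\tilde u\}dr$. $\gamma_\kappa(u)=\frac12\int_0^R\{ru_r^2+\frac{n^2}{r}u^2-2(\alpha^{-1}-\kappa)ru^2+2\alpha^{-1}\frac{ru^2}{1+\alpha u^2}\}dr$, $\gamma_\kappa'$ is its Fréchet derivative, $\langle\cdot,\cdot\rangle$ the duality between $H^{-1}$ and $H$, and $\mathcal{M}=\{u\in H\setminus\{0\}:\gamma_\kappa(u)=0\}$. *)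

(* Defs.v *)
From Stdlib Require Import Reals Lra ZArith.
From Coquelicot Require Import Coquelicot.
Open Scope R_scope.

Definition J0 (x : R) : R :=
  Series (fun m => (-1) ^ m / (INR (fact m)) ^ 2 * (x / 2) ^ (2 * m)).

Definition first_pos_zero_J0 (r0 : R) : Prop :=
  0 < r0 /\ J0 r0 = 0 /\ (forall x, 0 < x < r0 -> J0 x <> 0).

(** C^1 functions (any C^1[0,R] function extends to a C^1 function on the
    whole line; only the values on [0,R] matter below). *)
Definition C1 (u : R -> R) : Prop :=
  (forall x, ex_derive u x) /\ (forall x, continuous (Derive u) x).

Definition preH (R0 : R) (u : R -> R) : Prop :=
  C1 u /\ u 0 = 0 /\ u R0 = 0.

Definition normH2 (R0 : R) (u : R -> R) : R :=
  RInt (fun r => r * (Derive u r) ^ 2 + / r * (u r) ^ 2) 0 R0.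

(** H = completion of preH w.r.t. the norm above.  An element of H is
    represented by a Cauchy sequence of elements of preH. *)
Definition Hseq (R0 : R) (s : nat -> R -> R) : Prop :=
  (forall k, preH R0 (s k)) /\
  (forall eps, 0 < eps -> exists N, forall k l, (N <= k)%nat -> (N <= l)%nat ->
     normH2 R0 (fun x => s k x - s l x) < eps).

Definition H_nonzero (R0 : R) (s : nat -> R -> R) : Prop :=
  ~ is_lim_seq (fun k => normH2 R0 (s k)) 0.

Definition gamma (n : Z) (alpha kappa R0 : R) (u : R -> R) : R :=
  / 2 * RInt (fun r =>
      r * (Derive u r) ^ 2 + (IZR n) ^ 2 / r * (u r) ^ 2
      - 2 * (/ alpha - kappa) * r * (u r) ^ 2
      + 2 * / alpha * (r * (u r) ^ 2 / (1 + alpha * (u r) ^ 2))) 0 R0.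

(** gamma_kappa on H: its (continuous) extension, the limit along a
    representing Cauchy sequence. *)
Definition gammaH (n : Z) (alpha kappa R0 : R) (s : nat -> R -> R) : R :=
  real (Lim_seq (fun k => gamma n alpha kappa R0 (s k))).

(** <gamma_kappa'(u), u> : the Frechet derivative of gamma_kappa at u applied
    to u, i.e. d/dt gamma_kappa((1+t) u) at t = 0. *)
Definition dgamma_u_u (n : Z) (alpha kappa R0 : R) (s : nat -> R -> R) : R :=
  Derive (fun t => gammaH n alpha kappa R0 (fun k x => (1 + t) * s k x)) 0.

Definition in_M (n : Z) (alpha kappa R0 : R) (s : nat -> R -> R) : Prop :=
  Hseq R0 s /\ H_nonzero R0 s /\ gammaH n alpha kappa R0 s = 0.

(* Main.v *)
Require Import Defs.
From Stdlib Require Import Reals ZArith Lra Psatz FunctionalExtensionality.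
From Coquelicot Require Import Coquelicot.
Open Scope R_scope.

Lemma cont_mult (f g : R -> R) x : continuous f x -> continuous g x -> continuous (fun y => f y * g y) x.
Proof. intros; apply (continuous_mult f g); auto. Qed.
Lemma cont_plus (f g : R -> R) x : continuous f x -> continuous g x -> continuous (fun y => f y + g y) x.
Proof. intros; apply (continuous_plus f g); auto. Qed.
Lemma cont_minus (f g : R -> R) x : continuous f x -> continuous g x -> continuous (fun y => f y - g y) x.
Proof. intros; apply (continuous_minus f g); auto. Qed.
Lemma cont_const (c x : R) : continuous (fun _ : R => c) x.
Proof. apply continuous_const. Qed.
Lemma cont_id (x : R) : continuous (fun y : R => y) x.
Proof. apply continuous_id. Qed.
Lemma cont_pow (f : R -> R) n x : continuous f x -> continuous (fun y => f y ^ n) x.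
Proof. intros H; induction n; simpl. apply cont_const. apply cont_mult; auto. Qed.
Lemma cont_inv (f : R -> R) x : continuous f x -> f x <> 0 -> continuous (fun y => / f y) x.
Proof. intros; apply continuous_Rinv_comp; auto. Qed.
Lemma cont_div (f g : R -> R) x : continuous f x -> continuous g x -> g x <> 0 -> continuous (fun y => f y / g y) x.
Proof. intros; unfold Rdiv; apply cont_mult; auto; apply cont_inv; auto. Qed.

Lemma preH_exd R0 u x : preH R0 u -> ex_derive u x.
Proof. intros [[H1 H2] _]; auto. Qed.
Lemma preH_cont_u R0 u x : preH R0 u -> continuous u x.
Proof. intros H; exact (ex_derive_continuous u x (preH_exd R0 u x H)). Qed.
Lemma preH_cont_Du R0 u x : preH R0 u -> continuous (Derive u) x.
Proof. intros [[H1 H2] _]; auto. Qed.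

Lemma preH_cont_q R0 u x : preH R0 u -> continuous (fun r => / r * u r ^ 2) x.
Proof.
  intros HP.
  destruct (Req_dec x 0) as [->|Hx].
  2:{ apply cont_mult. apply cont_inv; auto; apply cont_id. apply cont_pow, (preH_cont_u R0); auto. }
  assert (Hu0 : u 0 = 0) by (destruct HP as [_ [H _]]; auto).
  apply continuity_pt_filterlim.
  intros eps Heps.
  pose proof (Derive_correct u 0 (preH_exd R0 u 0 HP)) as Hd.
  apply is_derive_Reals in Hd.
  destruct (Hd 1 Rlt_0_1) as [d1 Hd1].
  set (l := Derive u 0) in *.
  set (M := Rabs l + 1).
  assert (HM : 0 < M) by (unfold M; pose proof (Rabs_pos l); lra).
  pose proof (preH_cont_u R0 u 0 HP) as Hc.
  apply continuity_pt_filterlim in Hc.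
  destruct (Hc (eps / M)) as [d2 [Hd2 Hd2']].
  { apply Rdiv_lt_0_compat; auto. }
  exists (Rmin d1 d2). split. { apply Rmin_pos; auto. apply cond_pos. }
  intros h [[_ Hh0] Hh]. unfold dist in *; simpl in *; unfold Rdist in *.
  rewrite Hu0. rewrite Rminus_0_r in Hh.
  assert (Hh1 : Rabs h < d1) by (eapply Rlt_le_trans; [apply Hh| apply Rmin_l]).
  assert (Hh2 : Rabs (h - 0) < d2) by (rewrite Rminus_0_r; eapply Rlt_le_trans; [apply Hh| apply Rmin_r]).
  specialize (Hd1 h (not_eq_sym Hh0) Hh1).
  specialize (Hd2' h (conj (conj I Hh0) Hh2)). unfold dist in Hd2'; simpl in Hd2'; unfold Rdist in Hd2'. rewrite Hu0, Rminus_0_r in Hd2'.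
  rewrite Rplus_0_l, Hu0, Rminus_0_r in Hd1.
  replace (/ h * (u h * (u h * 1)) - / 0 * (0 * (0 * 1))) with (u h * (u h / h)).
  2:{ rewrite Rinv_0. simpl. field. auto. }
  rewrite Rabs_mult.
  assert (Hq : Rabs (u h / h) <= M).
  { unfold M. replace (u h / h) with ((u h / h - l) + l) by ring.
    eapply Rle_trans; [apply Rabs_triang|]. lra. }
  apply Rle_lt_trans with (Rabs (u h) * M).
  { apply Rmult_le_compat_l; auto. apply Rabs_pos. }
  apply Rlt_le_trans with (eps / M * M).
  { apply Rmult_lt_compat_r; auto. }
  right; field; lra.
Qed.

Lemma RInt_plus' (f g : R -> R) a b : ex_RInt f a b -> ex_RInt g a b ->
  RInt (fun x => f x + g x) a b = RInt f a b + RInt g a b.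
Proof. intros H1 H2; exact (RInt_plus f g a b H1 H2). Qed.
Lemma RInt_minus' (f g : R -> R) a b : ex_RInt f a b -> ex_RInt g a b ->
  RInt (fun x => f x - g x) a b = RInt f a b - RInt g a b.
Proof. intros H1 H2; exact (RInt_minus f g a b H1 H2). Qed.
Lemma RInt_scal' (f : R -> R) c a b : ex_RInt f a b ->
  RInt (fun x => c * f x) a b = c * RInt f a b.
Proof. intros H1; exact (RInt_scal f a b c H1). Qed.
Lemma ex_RInt_plus' (f g : R -> R) a b : ex_RInt f a b -> ex_RInt g a b ->
  ex_RInt (fun x => f x + g x) a b.
Proof. intros H1 H2; exact (ex_RInt_plus f g a b H1 H2). Qed.
Lemma ex_RInt_minus' (f g : R -> R) a b : ex_RInt f a b -> ex_RInt g a b ->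
  ex_RInt (fun x => f x - g x) a b.
Proof. intros H1 H2; exact (ex_RInt_minus f g a b H1 H2). Qed.
Lemma ex_RInt_scal' (f : R -> R) c a b : ex_RInt f a b ->
  ex_RInt (fun x => c * f x) a b.
Proof. intros H1; exact (ex_RInt_scal f a b c H1). Qed.

Lemma exRI (f : R -> R) a b : a <= b -> (forall x, a <= x <= b -> continuous f x) -> ex_RInt f a b.
Proof. intros Hab H; apply (ex_RInt_continuous (V:=R_CompleteNormedModule)). rewrite Rmin_left, Rmax_right; auto. Qed.

Lemma RInt_is (f : R -> R) a b l : is_RInt f a b l -> RInt f a b = l.
Proof. intros H; exact (is_RInt_unique (V:=R_CompleteNormedModule) f a b l H). Qed.

Lemma RInt_Chasles' (f : R -> R) a b c : ex_RInt f a b -> ex_RInt f b c ->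
  RInt f a b + RInt f b c = RInt f a c.
Proof. intros H1 H2; exact (RInt_Chasles f a b c H1 H2). Qed.

Ltac contt HP :=
  lazymatch goal with
  | |- continuous (fun y => / y * _ ^ 2) _ => apply (preH_cont_q _ _ _ HP)
  | |- continuous (fun y => @?f y + @?g y) _ => apply (cont_plus f g); contt HP
  | |- continuous (fun y => @?f y - @?g y) _ => apply (cont_minus f g); contt HP
  | |- continuous (fun y => @?f y * @?g y) _ => apply (cont_mult f g); contt HP
  | |- continuous (fun y => @?f y ^ ?n) _ => apply (cont_pow f n); contt HP
  | |- continuous (fun y => Derive _ y) _ => apply (preH_cont_Du _ _ _ HP)
  | |- continuous (Derive _) _ => apply (preH_cont_Du _ _ _ HP)
  | |- continuous (fun y => y) _ => apply cont_id
  | |- continuous _ _ => first [apply (preH_cont_u _ _ _ HP) | apply cont_const]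
  end.

Lemma amgm_r r a b : 0 < r -> 2 * a * b <= r * b ^ 2 + / r * a ^ 2.
Proof.
  intros Hr. assert (E : r * b ^ 2 + / r * a ^ 2 - 2 * a * b = / r * (r * b - a) ^ 2) by (field; lra).
  assert (0 <= / r * (r * b - a) ^ 2).
  { apply Rmult_le_pos. left; apply Rinv_0_lt_compat; auto. apply pow2_ge_0. }
  lra.
Qed.

Lemma normH2_ge0 R0 u : 0 < R0 -> preH R0 u -> 0 <= normH2 R0 u.
Proof.
  intros HR HP. unfold normH2. apply RInt_ge_0. lra.
  apply exRI. lra. intros; contt HP.
  intros x Hx. apply Rplus_le_le_0_compat.
  apply Rmult_le_pos. lra. apply pow2_ge_0.
  apply Rmult_le_pos. left; apply Rinv_0_lt_compat; lra. apply pow2_ge_0.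
Qed.

Lemma sup_bound R0 u x : 0 < R0 -> preH R0 u -> 0 <= x <= R0 -> u x ^ 2 <= normH2 R0 u.
Proof.
  intros HR HP Hx.
  assert (Hu0 : u 0 = 0) by (destruct HP as [_ [H _]]; auto).
  destruct (Req_dec x 0) as [->|Hx0].
  { rewrite Hu0. replace (0 ^ 2) with 0 by ring. apply normH2_ge0; auto. }
  assert (Hint : is_RInt (fun r => 2 * u r * Derive u r) 0 x (minus (u x ^ 2) (u 0 ^ 2))).
  { apply (is_RInt_derive (fun r => u r ^ 2)).
    - intros y _. pose proof (preH_exd R0 u y HP) as He.
      evar (l : R). replace (2 * u y * Derive u y) with l.
      2:{ unfold l. reflexivity. }
      unfold l. clear l.
      apply (is_derive_ext (fun r => u r * u r)). { intros; simpl; ring. }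
      replace (2 * u y * Derive u y) with (Derive u y * u y + u y * Derive u y) by ring.
      apply (is_derive_mult u u); try apply Derive_correct; auto.
      intros; apply Rmult_comm.
    - intros y _. contt HP. }
  apply RInt_is in Hint.
  rewrite Hu0 in Hint. unfold minus, plus, opp in Hint; simpl in Hint.
  assert (E : u x ^ 2 = RInt (fun r => 2 * u r * Derive u r) 0 x) by (rewrite Hint; ring). rewrite E.
  assert (Hex : forall a b, a <= b -> ex_RInt (fun r => r * Derive u r ^ 2 + / r * u r ^ 2) a b).
  { intros a b Hab. apply exRI; auto. intros; contt HP. }
  apply Rle_trans with (RInt (fun r => r * Derive u r ^ 2 + / r * u r ^ 2) 0 x).
  { apply RInt_le. lra. apply exRI. lra. intros; contt HP. apply Hex; lra.
    intros y Hy. apply amgm_r. lra. }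
  unfold normH2.
  rewrite <- (RInt_Chasles' (fun r => r * Derive u r ^ 2 + / r * u r ^ 2) 0 x R0).
  2: apply Hex; lra. 2: apply Hex; lra.
  assert (0 <= RInt (fun r => r * Derive u r ^ 2 + / r * u r ^ 2) x R0).
  { apply RInt_ge_0. lra. apply Hex; lra. intros y Hy.
    apply Rplus_le_le_0_compat.
    apply Rmult_le_pos. lra. apply pow2_ge_0.
    apply Rmult_le_pos. left; apply Rinv_0_lt_compat; lra. apply pow2_ge_0. }
  lra.
Qed.

Definition Pp (S r : R) := 20 * S ^ 4 - 25 * S ^ 2 * r ^ 2 + 6 * r ^ 4.
Definition Nn (S r : R) := 20 * S ^ 4 - 75 * S ^ 2 * r ^ 2 + 30 * r ^ 4.
Definition GG (S r : R) := Nn S r / Pp S r.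
Definition GG' (S r : R) :=
  ((-150 * S ^ 2 * r + 120 * r ^ 3) * Pp S r - Nn S r * (-50 * S ^ 2 * r + 24 * r ^ 3)) / Pp S r ^ 2.

Lemma Pp_pos S r : 0 < S -> 0 <= r <= S -> 0 < Pp S r.
Proof.
  intros HS Hr. unfold Pp.
  assert (E : 20 * S ^ 4 - 25 * S ^ 2 * r ^ 2 + 6 * r ^ 4 =
     (S ^ 2 - r ^ 2) * (20 * S ^ 2 - 5 * r ^ 2) + r ^ 4) by ring.
  rewrite E.
  assert (h1 : 0 <= S ^ 2 - r ^ 2) by nra.
  assert (h2 : 0 < 20 * S ^ 2 - 5 * r ^ 2) by nra.
  destruct (Req_dec r 0) as [->|Hr0].
  { simpl. nra. }
  assert (0 < r ^ 4) by (apply pow_lt; lra).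
  nra.
Qed.

Lemma GG_derive S r : 0 < S -> 0 <= r <= S -> is_derive (GG S) r (GG' S r).
Proof.
  intros HS Hr. pose proof (Pp_pos S r HS Hr) as HP.
  unfold GG, GG', Nn, Pp in *. auto_derive. lra. field. lra.
Qed.

Lemma GG_cont S r : 0 < S -> 0 <= r <= S -> continuous (GG S) r.
Proof.
  intros HS Hr. apply (ex_derive_continuous (GG S)). eexists; apply GG_derive; auto.
Qed.

Lemma GG'_cont S r : 0 < S -> 0 <= r <= S -> continuous (GG' S) r.
Proof.
  intros HS Hr. pose proof (Pp_pos S r HS Hr) as HP.
  apply (ex_derive_continuous (GG' S)).
  unfold GG', Nn, Pp in *. auto_derive. simpl in HP |- *. intro H0. nra.
Qed.

Lemma poinc_pt S r p x : 0 < S -> 0 < r < S ->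
  GG' S r * x ^ 2 + GG S r * (2 * x * p) <= (r * p ^ 2 + / r * x ^ 2) - 10 / S ^ 2 * (r * x ^ 2).
Proof.
  intros HS Hr. assert (HP : 0 < Pp S r) by (apply Pp_pos; lra).
  assert (E : (r * p ^ 2 + / r * x ^ 2) - 10 / S ^ 2 * (r * x ^ 2) - (GG' S r * x ^ 2 + GG S r * (2 * x * p))
     = r * (p - GG S r * x / r) ^ 2 + r ^ 3 * (106 * S ^ 2 - 60 * r ^ 2) / (S ^ 2 * Pp S r) * x ^ 2).
  { unfold GG', GG, Nn. unfold Pp in *. field. repeat split; lra. }
  assert (0 <= r * (p - GG S r * x / r) ^ 2) by (apply Rmult_le_pos; [lra| apply pow2_ge_0]).
  assert (0 <= r ^ 3 * (106 * S ^ 2 - 60 * r ^ 2) / (S ^ 2 * Pp S r) * x ^ 2).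
  { apply Rmult_le_pos; [|apply pow2_ge_0]. apply Rmult_le_pos.
    apply Rmult_le_pos. apply pow_le; lra. nra.
    left; apply Rinv_0_lt_compat. apply Rmult_lt_0_compat; nra. }
  lra.
Qed.

Definition Bq R0 (u : R -> R) : R := RInt (fun r => r * u r ^ 2) 0 R0.

Lemma poincare R0 u : 0 < R0 -> preH R0 u -> 10 / R0 ^ 2 * Bq R0 u <= normH2 R0 u.
Proof.
  intros HR HP.
  pose proof HP as [HC [Hu0 HuR]].
  assert (Hint : is_RInt (fun r => GG' R0 r * u r ^ 2 + GG R0 r * (2 * u r * Derive u r)) 0 R0
                    (minus (GG R0 R0 * u R0 ^ 2) (GG R0 0 * u 0 ^ 2))).
  { apply (is_RInt_derive (fun r => GG R0 r * u r ^ 2)).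
    - intros y Hy. rewrite Rmin_left, Rmax_right in Hy by lra.
      pose proof (preH_exd R0 u y HP) as He.
      apply (is_derive_mult (GG R0) (fun r => u r ^ 2)).
      + apply GG_derive; lra.
      + apply (is_derive_ext (fun r => u r * u r)). { intros; simpl; ring. }
        replace (2 * u y * Derive u y) with (Derive u y * u y + u y * Derive u y) by ring.
        apply (is_derive_mult u u); try apply Derive_correct; auto.
        intros; apply Rmult_comm.
      + intros; apply Rmult_comm.
    - intros y Hy. rewrite Rmin_left, Rmax_right in Hy by lra.
      apply cont_plus. apply cont_mult. apply GG'_cont; lra. contt HP.
      apply cont_mult. apply GG_cont; lra. contt HP. }
  apply RInt_is in Hint. rewrite Hu0, HuR in Hint.
  assert (E0 : RInt (fun r => GG' R0 r * u r ^ 2 + GG R0 r * (2 * u r * Derive u r)) 0 R0 = 0)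
    by (rewrite Hint; unfold minus, plus, opp; simpl; ring).
  assert (Hex1 : ex_RInt (fun r => r * Derive u r ^ 2 + / r * u r ^ 2) 0 R0).
  { apply exRI. lra. intros; contt HP. }
  assert (Hex2 : ex_RInt (fun r => r * u r ^ 2) 0 R0).
  { apply exRI. lra. intros; contt HP. }
  assert (Hle : RInt (fun r => GG' R0 r * u r ^ 2 + GG R0 r * (2 * u r * Derive u r)) 0 R0 <=
     RInt (fun r => (r * Derive u r ^ 2 + / r * u r ^ 2) - 10 / R0 ^ 2 * (r * u r ^ 2)) 0 R0).
  { apply RInt_le. lra.
    - apply exRI. lra. intros y Hy.
      apply cont_plus. apply cont_mult. apply GG'_cont; lra. contt HP.
      apply cont_mult. apply GG_cont; lra. contt HP.
    - apply ex_RInt_minus'; auto. apply ex_RInt_scal'; auto.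
    - intros y Hy. apply poinc_pt; lra. }
  rewrite E0 in Hle. rewrite RInt_minus' in Hle; auto. 2: apply ex_RInt_scal'; auto.
  rewrite RInt_scal' in Hle; auto.
  unfold normH2, Bq. lra.
Qed.

Definition Dq R0 (u : R -> R) : R := RInt (fun r => r * Derive u r ^ 2) 0 R0.
Definition Iq R0 (u : R -> R) : R := RInt (fun r => / r * u r ^ 2) 0 R0.
Definition Nq R0 a s (u : R -> R) : R := RInt (fun r => r * (s * u r ^ 2 / (1 + a * (s * u r ^ 2)))) 0 R0.
Definition Np R0 a (u : R -> R) : R := RInt (fun r => r * (u r ^ 2 / (1 + a * u r ^ 2) ^ 2)) 0 R0.
Definition Fq R0 a (u : R -> R) : R := RInt (fun r => r * (u r ^ 4 / (1 + a * u r ^ 2))) 0 R0.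
Definition Dd R0 a (u : R -> R) : R := RInt (fun r => r * (u r ^ 4 / (1 + a * u r ^ 2) ^ 2)) 0 R0.

Lemma den_pos a s x : 0 < a -> 0 <= s -> 0 < 1 + a * (s * x ^ 2).
Proof. intros; assert (0 <= x ^ 2) by apply pow2_ge_0. assert (0 <= s * x^2) by nra. nra. Qed.
Lemma den_pos1 a x : 0 < a -> 0 < 1 + a * x ^ 2.
Proof. intros; assert (0 <= x ^ 2) by apply pow2_ge_0. nra. Qed.

Ltac exri := lazymatch goal with
 | |- ex_RInt (fun x => @?f x + @?g x) _ _ => apply (ex_RInt_plus' f g); exri
 | |- ex_RInt (fun x => @?f x - @?g x) _ _ => apply (ex_RInt_minus' f g); exri
 | |- ex_RInt (fun x => _ * _) _ _ => first [assumption | apply ex_RInt_scal'; exri]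
 | _ => auto
 end.

Lemma RInt_ext' (f g : R -> R) a b : (forall x, Rmin a b < x < Rmax a b -> f x = g x) ->
  RInt f a b = RInt g a b.
Proof. intros H; exact (RInt_ext f g a b H). Qed.

Lemma ex_D R0 u : 0 < R0 -> preH R0 u -> ex_RInt (fun r => r * Derive u r ^ 2) 0 R0.
Proof. intros; apply exRI; [lra|]; intros; contt H0. Qed.
Lemma ex_I R0 u : 0 < R0 -> preH R0 u -> ex_RInt (fun r => / r * u r ^ 2) 0 R0.
Proof. intros; apply exRI; [lra|]; intros; contt H0. Qed.
Lemma ex_B R0 u : 0 < R0 -> preH R0 u -> ex_RInt (fun r => r * u r ^ 2) 0 R0.
Proof. intros; apply exRI; [lra|]; intros; contt H0. Qed.
Lemma ex_N R0 a s u : 0 < R0 -> 0 < a -> 0 <= s -> preH R0 u ->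
  ex_RInt (fun r => r * (s * u r ^ 2 / (1 + a * (s * u r ^ 2)))) 0 R0.
Proof.
  intros HR Ha Hs HP; apply exRI; [lra|]; intros.
  apply cont_mult. apply cont_id. apply cont_div. contt HP. contt HP.
  apply Rgt_not_eq, den_pos; auto.
Qed.
Lemma ex_Np R0 a u : 0 < R0 -> 0 < a -> preH R0 u ->
  ex_RInt (fun r => r * (u r ^ 2 / (1 + a * u r ^ 2) ^ 2)) 0 R0.
Proof.
  intros HR Ha HP; apply exRI; [lra|]; intros.
  apply cont_mult. apply cont_id. apply cont_div. contt HP. contt HP.
  apply pow_nonzero, Rgt_not_eq, den_pos1; auto.
Qed.
Lemma ex_F R0 a u : 0 < R0 -> 0 < a -> preH R0 u ->
  ex_RInt (fun r => r * (u r ^ 4 / (1 + a * u r ^ 2))) 0 R0.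
Proof.
  intros HR Ha HP; apply exRI; [lra|]; intros.
  apply cont_mult. apply cont_id. apply cont_div. contt HP. contt HP.
  apply Rgt_not_eq, den_pos1; auto.
Qed.
Lemma ex_Dd R0 a u : 0 < R0 -> 0 < a -> preH R0 u ->
  ex_RInt (fun r => r * (u r ^ 4 / (1 + a * u r ^ 2) ^ 2)) 0 R0.
Proof.
  intros HR Ha HP; apply exRI; [lra|]; intros.
  apply cont_mult. apply cont_id. apply cont_div. contt HP. contt HP.
  apply pow_nonzero, Rgt_not_eq, den_pos1; auto.
Qed.

Lemma normH2_split R0 u : 0 < R0 -> preH R0 u -> normH2 R0 u = Dq R0 u + Iq R0 u.
Proof.
  intros HR HP. unfold normH2, Dq, Iq. apply RInt_plus'; [apply ex_D|apply ex_I]; auto.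
Qed.

Lemma gamma_scaled n a k R0 c u : 0 < R0 -> 0 < a -> preH R0 u ->
  gamma n a k R0 (fun x => c * u x) =
  / 2 * (c ^ 2 * Dq R0 u + IZR n ^ 2 * (c ^ 2 * Iq R0 u) - 2 * (/ a - k) * (c ^ 2 * Bq R0 u)
         + 2 * / a * Nq R0 a (c ^ 2) u).
Proof.
  intros HR Ha HP. unfold gamma. f_equal.
  rewrite (RInt_ext' _ (fun r => ((c ^ 2 * (r * Derive u r ^ 2) + IZR n ^ 2 * (c ^ 2 * (/ r * u r ^ 2)))
        - 2 * (/ a - k) * (c ^ 2 * (r * u r ^ 2)))
        + 2 * / a * (r * (c ^ 2 * u r ^ 2 / (1 + a * (c ^ 2 * u r ^ 2)))))).
  2:{ intros x _. rewrite Derive_scal. rewrite !Rpow_mult_distr. unfold Rdiv. ring. }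
  assert (HN := ex_N R0 a (c ^ 2) u HR Ha (pow2_ge_0 c) HP).
  pose proof (ex_D R0 u HR HP). pose proof (ex_I R0 u HR HP). pose proof (ex_B R0 u HR HP).
  rewrite RInt_plus'.
  rewrite RInt_minus'.
  rewrite RInt_plus'.
  rewrite !RInt_scal'. { unfold Dq, Iq, Bq, Nq. reflexivity. }
  all: exri.
Qed.

Lemma NF_id R0 a u : 0 < R0 -> 0 < a -> preH R0 u -> Bq R0 u - Nq R0 a 1 u = a * Fq R0 a u.
Proof.
  intros HR Ha HP. unfold Bq, Nq, Fq.
  rewrite <- RInt_minus'. 2: apply ex_B; auto. 2: apply ex_N; auto; lra.
  rewrite <- RInt_scal'. 2: apply ex_F; auto.
  apply RInt_ext'. intros x _. pose proof (den_pos1 a (u x) Ha).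
  field. lra.
Qed.

Lemma ND_id R0 a u : 0 < R0 -> 0 < a -> preH R0 u -> Nq R0 a 1 u - Np R0 a u = a * Dd R0 a u.
Proof.
  intros HR Ha HP. unfold Dd, Nq, Np.
  rewrite <- RInt_minus'. 2: apply ex_N; auto; lra. 2: apply ex_Np; auto.
  rewrite <- RInt_scal'. 2: apply ex_Dd; auto.
  apply RInt_ext'. intros x _. pose proof (den_pos1 a (u x) Ha).
  field. lra.
Qed.

Lemma Dq_ge0 R0 u : 0 < R0 -> preH R0 u -> 0 <= Dq R0 u.
Proof. intros. apply RInt_ge_0. lra. apply ex_D; auto. intros; apply Rmult_le_pos; [lra|apply pow2_ge_0]. Qed.
Lemma Iq_ge0 R0 u : 0 < R0 -> preH R0 u -> 0 <= Iq R0 u.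
Proof. intros. apply RInt_ge_0. lra. apply ex_I; auto. intros; apply Rmult_le_pos; [left; apply Rinv_0_lt_compat; lra|apply pow2_ge_0]. Qed.
Lemma Bq_ge0 R0 u : 0 < R0 -> preH R0 u -> 0 <= Bq R0 u.
Proof. intros. apply RInt_ge_0. lra. apply ex_B; auto. intros; apply Rmult_le_pos; [lra|apply pow2_ge_0]. Qed.

Lemma r_le_inv R0 r y : 0 < r < R0 -> 0 <= y -> r * y <= R0 ^ 2 * (/ r * y).
Proof.
  intros Hr Hy. assert (E : R0 ^ 2 * (/ r * y) = (R0 ^ 2 / r) * y) by (field; lra). rewrite E.
  apply Rmult_le_compat_r; auto. apply Rmult_le_reg_r with r. lra.
  unfold Rdiv. rewrite Rmult_assoc, Rinv_l by lra. nra.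
Qed.

Lemma BI R0 u : 0 < R0 -> preH R0 u -> Bq R0 u <= R0 ^ 2 * Iq R0 u.
Proof.
  intros HR HP. unfold Bq, Iq. rewrite <- RInt_scal'. 2: apply ex_I; auto.
  apply RInt_le. lra. apply ex_B; auto. apply ex_RInt_scal', ex_I; auto.
  intros r Hr. apply r_le_inv; auto. apply pow2_ge_0.
Qed.

Lemma F_bound1 R0 a u : 0 < R0 -> 0 < a -> preH R0 u -> Fq R0 a u <= R0 ^ 2 * normH2 R0 u ^ 2.
Proof.
  intros HR Ha HP.
  assert (HQ0 := normH2_ge0 R0 u HR HP).
  assert (H1 : Fq R0 a u <= normH2 R0 u * Bq R0 u).
  { unfold Fq, Bq. rewrite <- RInt_scal'. 2: apply ex_B; auto.
    apply RInt_le. lra. apply ex_F; auto. apply ex_RInt_scal', ex_B; auto.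
    intros r Hr. pose proof (sup_bound R0 u r HR HP ltac:(lra)) as Hs.
    pose proof (den_pos1 a (u r) Ha).
    assert (0 <= u r ^ 2) by apply pow2_ge_0.
    assert (X : u r ^ 4 / (1 + a * u r ^ 2) <= u r ^ 2 * normH2 R0 u).
    { apply Rmult_le_reg_r with (1 + a * u r ^ 2); auto.
      unfold Rdiv. rewrite Rmult_assoc, Rinv_l by lra.
      replace (u r ^ 4) with (u r ^ 2 * u r ^ 2) by ring.
      assert (u r ^ 2 * u r ^ 2 <= u r ^ 2 * normH2 R0 u) by (apply Rmult_le_compat_l; auto).
      assert (0 <= u r ^ 2 * normH2 R0 u * (a * u r ^ 2)).
      { apply Rmult_le_pos. apply Rmult_le_pos; auto. apply Rmult_le_pos; lra. }
      lra. }
    replace (normH2 R0 u * (r * u r ^ 2)) with (r * (u r ^ 2 * normH2 R0 u)) by ring.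
    apply Rmult_le_compat_l; lra. }
  pose proof (BI R0 u HR HP). pose proof (normH2_split R0 u HR HP).
  pose proof (Dq_ge0 R0 u HR HP). pose proof (Bq_ge0 R0 u HR HP).
  assert (Iq R0 u <= normH2 R0 u) by lra.
  assert (normH2 R0 u * Bq R0 u <= normH2 R0 u * (R0 ^ 2 * Iq R0 u)) by (apply Rmult_le_compat_l; auto).
  assert (R0 ^ 2 * Iq R0 u <= R0 ^ 2 * normH2 R0 u) by (apply Rmult_le_compat_l; auto; apply pow2_ge_0).
  assert (normH2 R0 u * (R0 ^ 2 * Iq R0 u) <= normH2 R0 u * (R0 ^ 2 * normH2 R0 u)) by (apply Rmult_le_compat_l; auto).
  replace (R0 ^ 2 * normH2 R0 u ^ 2) with (normH2 R0 u * (R0 ^ 2 * normH2 R0 u)) by ring.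
  lra.
Qed.

Lemma F_bound2 R0 a u : 0 < R0 -> 0 < a -> preH R0 u ->
  Fq R0 a u <= (1 + a * normH2 R0 u) * Dd R0 a u.
Proof.
  intros HR Ha HP.
  unfold Fq, Dd. rewrite <- RInt_scal'. 2: apply ex_Dd; auto.
  apply RInt_le. lra. apply ex_F; auto. apply ex_RInt_scal', ex_Dd; auto.
  intros r Hr. pose proof (sup_bound R0 u r HR HP ltac:(lra)) as Hs.
  pose proof (den_pos1 a (u r) Ha).
  assert (0 <= u r ^ 4) by (replace (u r ^ 4) with ((u r ^ 2) ^ 2) by ring; apply pow2_ge_0).
  assert (E : u r ^ 4 / (1 + a * u r ^ 2) = (1 + a * u r ^ 2) * (u r ^ 4 / (1 + a * u r ^ 2) ^ 2))
    by (field; lra).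
  rewrite E.
  assert (0 <= u r ^ 4 / (1 + a * u r ^ 2) ^ 2).
  { apply Rmult_le_pos; auto. left; apply Rinv_0_lt_compat, pow_lt; auto. }
  replace ((1 + a * normH2 R0 u) * (r * (u r ^ 4 / (1 + a * u r ^ 2) ^ 2))) with
    (r * ((1 + a * normH2 R0 u) * (u r ^ 4 / (1 + a * u r ^ 2) ^ 2))) by ring.
  apply Rmult_le_compat_l. lra. apply Rmult_le_compat_r; auto.
  assert (a * u r ^ 2 <= a * normH2 R0 u) by (apply Rmult_le_compat_l; lra). lra.
Qed.

Definition Hd (u v : R -> R) r := r * (Derive u r - Derive v r) ^ 2 + / r * (u r - v r) ^ 2.
Definition H0 (u : R -> R) r := r * Derive u r ^ 2 + / r * u r ^ 2.

Lemma preH_minus R0 u v : preH R0 u -> preH R0 v -> preH R0 (fun x => u x - v x).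
Proof.
  intros Hu Hv. pose proof Hu as [[Hu1 Hu2] [Hu3 Hu4]]. pose proof Hv as [[Hv1 Hv2] [Hv3 Hv4]].
  split; [split|split].
  - intros x. exact (ex_derive_minus (K:=R_AbsRing) (V:=R_NormedModule) u v x (Hu1 x) (Hv1 x)).
  - intros x. assert (E : Derive (fun x => u x - v x) = fun x => Derive u x - Derive v x).
    { apply functional_extensionality; intros y. apply Derive_minus; auto. }
    rewrite E. apply cont_minus; auto.
  - rewrite Hu3, Hv3; ring.
  - rewrite Hu4, Hv4; ring.
Qed.

Lemma Hd_eq R0 u v r : preH R0 u -> preH R0 v ->
  Hd u v r = H0 (fun x => u x - v x) r.
Proof.
  intros Hu Hv. unfold Hd, H0. rewrite Derive_minus; auto.
  apply (preH_exd R0); auto. apply (preH_exd R0); auto.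
Qed.

Lemma ex_H0 R0 u : 0 < R0 -> preH R0 u -> ex_RInt (H0 u) 0 R0.
Proof. intros HR HP. apply exRI; [lra|]. intros; unfold H0; contt HP. Qed.

Lemma ex_Hd R0 u v : 0 < R0 -> preH R0 u -> preH R0 v -> ex_RInt (Hd u v) 0 R0.
Proof.
  intros HR Hu Hv. apply (ex_RInt_ext (H0 (fun x => u x - v x))).
  intros; symmetry; apply (Hd_eq R0); auto.
  apply ex_H0; auto. apply preH_minus; auto.
Qed.

Lemma RInt_Hd R0 u v : 0 < R0 -> preH R0 u -> preH R0 v ->
  RInt (Hd u v) 0 R0 = normH2 R0 (fun x => u x - v x).
Proof.
  intros HR Hu Hv. unfold normH2. apply RInt_ext'. intros; apply (Hd_eq R0); auto.
Qed.

Lemma H0_ge0 u r : 0 < r -> 0 <= H0 u r.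
Proof.
  intros Hr. unfold H0. apply Rplus_le_le_0_compat; apply Rmult_le_pos; try apply pow2_ge_0.
  lra. left; apply Rinv_0_lt_compat; lra.
Qed.

Lemma sq_split w a b : 0 <= w -> w * a ^ 2 <= 2 * (w * (a - b) ^ 2) + 2 * (w * b ^ 2).
Proof.
  intros Hw. assert (E : 2 * (w * (a - b) ^ 2) + 2 * (w * b ^ 2) - w * a ^ 2 = w * (a - 2 * b) ^ 2) by ring.
  assert (0 <= w * (a - 2 * b) ^ 2) by (apply Rmult_le_pos; auto; apply pow2_ge_0). lra.
Qed.

Lemma Hseq_bound R0 s : 0 < R0 -> Hseq R0 s ->
  exists M N0, 0 <= M /\ forall k, (N0 <= k)%nat -> normH2 R0 (s k) <= M.
Proof.
  intros HR [Hp Hc]. destruct (Hc 1 Rlt_0_1) as [N0 HN0].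
  exists (2 + 2 * normH2 R0 (s N0)), N0. split.
  { pose proof (normH2_ge0 R0 (s N0) HR (Hp N0)). lra. }
  intros k Hk. specialize (HN0 k N0 Hk (le_n _)).
  rewrite <- RInt_Hd in HN0 by auto.
  assert (E1 := ex_H0 R0 (s k) HR (Hp k)). assert (E2 := ex_H0 R0 (s N0) HR (Hp N0)).
  assert (E3 := ex_Hd R0 (s k) (s N0) HR (Hp k) (Hp N0)).
  assert (normH2 R0 (s k) <= 2 * RInt (Hd (s k) (s N0)) 0 R0 + 2 * normH2 R0 (s N0)).
  { unfold normH2. fold (H0 (s k)). fold (H0 (s N0)).
    rewrite <- (RInt_scal' (Hd (s k) (s N0))) by auto.
    rewrite <- (RInt_scal' (H0 (s N0))) by auto.
    rewrite <- RInt_plus' by exri.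
    apply RInt_le. lra. auto. exri.
    intros r Hr. unfold Hd, H0.
    assert (0 < / r) by (apply Rinv_0_lt_compat; lra).
    assert (r * Derive (s k) r ^ 2 <= 2 * (r * (Derive (s k) r - Derive (s N0) r) ^ 2) + 2 * (r * Derive (s N0) r ^ 2)) by (apply sq_split; lra).
    assert (/ r * s k r ^ 2 <= 2 * (/ r * (s k r - s N0 r) ^ 2) + 2 * (/ r * s N0 r ^ 2)) by (apply sq_split; lra).
    lra. }
  lra.
Qed.

Lemma ex_RInt_ext' (f g : R -> R) a b : (forall x, Rmin a b < x < Rmax a b -> f x = g x) ->
  ex_RInt f a b -> ex_RInt g a b.
Proof. intros H1 H2; exact (ex_RInt_ext f g a b H1 H2). Qed.

Lemma cauchy_gen R0 s (F : nat -> R -> R) K :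
  0 < R0 -> Hseq R0 s -> 0 <= K ->
  (forall k, ex_RInt (F k) 0 R0) ->
  (forall k l d r, 0 < d -> 0 < r < R0 ->
     Rabs (F k r - F l r) <= K * (/ d * Hd (s k) (s l) r + d * (H0 (s k) r + H0 (s l) r))) ->
  ex_finite_lim_seq (fun k => RInt (F k) 0 R0).
Proof.
  intros HR Hs HK HF Hpt.
  destruct (Hseq_bound R0 s HR Hs) as [M [N0 [HM HMb]]].
  pose proof Hs as [Hp Hc].
  apply ex_lim_seq_cauchy_corr. intros [eps Heps]. simpl.
  set (d := eps / (4 * (K * M + 1))).
  assert (Hd0 : 0 < d). { unfold d. apply Rdiv_lt_0_compat; auto. nra. }
  destruct (Hc (eps * d / (2 * (K + 1)))) as [N1 HN1].
  { apply Rdiv_lt_0_compat; nra. }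
  exists (max N0 N1). intros k l Hk Hl.
  assert (Hk0 : (N0 <= k)%nat) by lia. assert (Hl0 : (N0 <= l)%nat) by lia.
  assert (Hk1 : (N1 <= k)%nat) by lia. assert (Hl1 : (N1 <= l)%nat) by lia.
  specialize (HN1 k l Hk1 Hl1). rewrite <- RInt_Hd in HN1 by auto.
  pose proof (HMb k Hk0) as HQk. pose proof (HMb l Hl0) as HQl.
  assert (Ek := ex_H0 R0 (s k) HR (Hp k)). assert (El := ex_H0 R0 (s l) HR (Hp l)).
  assert (Ekl := ex_Hd R0 (s k) (s l) HR (Hp k) (Hp l)).
  set (B := fun r => K * (/ d * Hd (s k) (s l) r + d * (H0 (s k) r + H0 (s l) r))).
  assert (HexB : ex_RInt B 0 R0).
  { unfold B. apply ex_RInt_scal', ex_RInt_plus'. apply ex_RInt_scal', ex_Hd; auto.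
    apply ex_RInt_scal', ex_RInt_plus'; apply ex_H0; auto. }
  assert (HIB : RInt B 0 R0 = K * (/ d * RInt (Hd (s k) (s l)) 0 R0 + d * (normH2 R0 (s k) + normH2 R0 (s l)))).
  { unfold B. rewrite RInt_scal', RInt_plus', !RInt_scal', RInt_plus'. reflexivity.
    all: exri. }
  assert (HeI : 0 <= RInt (Hd (s k) (s l)) 0 R0).
  { rewrite RInt_Hd by auto. apply normH2_ge0; auto. apply preH_minus; auto. }
  assert (Hbound : RInt B 0 R0 < eps).
  { rewrite HIB.
    assert (h1 : K * (/ d * RInt (Hd (s k) (s l)) 0 R0) <= eps / 2).
    { assert (E : K * (/ d * RInt (Hd (s k) (s l)) 0 R0) = (K / d) * RInt (Hd (s k) (s l)) 0 R0) by (field; lra).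
      rewrite E.
      apply Rle_trans with ((K / d) * (eps * d / (2 * (K + 1)))).
      apply Rmult_le_compat_l. apply Rdiv_le_0_compat; lra. lra.
      assert (E2 : K / d * (eps * d / (2 * (K + 1))) = eps / 2 * (K / (K + 1))) by (field; lra).
      rewrite E2. assert (K / (K + 1) <= 1).
      { apply Rmult_le_reg_r with (K + 1). lra. unfold Rdiv; rewrite Rmult_assoc, Rinv_l by lra. lra. }
      nra. }
    assert (h2 : K * (d * (normH2 R0 (s k) + normH2 R0 (s l))) <= 2 * d * (K * M)).
    { assert (normH2 R0 (s k) + normH2 R0 (s l) <= 2 * M) by lra.
      replace (K * (d * (normH2 R0 (s k) + normH2 R0 (s l)))) with ((K * d) * (normH2 R0 (s k) + normH2 R0 (s l))) by ring.
      replace (2 * d * (K * M)) with ((K * d) * (2 * M)) by ring.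
      apply Rmult_le_compat_l; auto. apply Rmult_le_pos; lra. }
    assert (h3 : 2 * d * (K * M) < eps / 2).
    { unfold d. assert (E : 2 * (eps / (4 * (K * M + 1))) * (K * M) = eps / 2 * (K * M / (K * M + 1))) by (field; nra).
      rewrite E. assert (K * M / (K * M + 1) < 1).
      { apply Rmult_lt_reg_r with (K * M + 1). nra. unfold Rdiv; rewrite Rmult_assoc, Rinv_l by nra. nra. }
      nra. }
    nra. }
  assert (Hup : RInt (fun r => F k r - F l r) 0 R0 <= RInt B 0 R0).
  { apply RInt_le. lra. apply ex_RInt_minus'; auto. auto.
    intros r Hr. pose proof (Hpt k l d r Hd0 Hr). unfold B. pose proof (Rle_abs (F k r - F l r)). lra. }
  assert (Hlo : RInt (fun r => - B r) 0 R0 <= RInt (fun r => F k r - F l r) 0 R0).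
  { apply RInt_le. lra. apply (ex_RInt_ext' (fun r => (-1) * B r)). intros; ring. apply ex_RInt_scal'; auto.
    apply ex_RInt_minus'; auto.
    intros r Hr. pose proof (Hpt k l d r Hd0 Hr). unfold B. pose proof (Rle_abs (-(F k r - F l r))) as HH.
    rewrite Rabs_Ropp in HH. lra. }
  rewrite (RInt_ext' (fun r => - B r) (fun r => (-1) * B r)) in Hlo by (intros; ring).
  rewrite RInt_scal' in Hlo by auto.
  rewrite RInt_minus' in Hup, Hlo by auto.
  apply Rabs_def1; lra.
Qed.

Lemma sqdiff a b d : 0 < d -> Rabs (a ^ 2 - b ^ 2) <= / d * (a - b) ^ 2 + d * (a ^ 2 + b ^ 2).
Proof.
  intros Hd.
  assert (E1 : / d * ((a - b) - d * (a + b)) ^ 2 = / d * (a - b) ^ 2 - 2 * (a ^ 2 - b ^ 2) + d * (a + b) ^ 2) by (field; lra).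
  assert (E2 : / d * ((a - b) + d * (a + b)) ^ 2 = / d * (a - b) ^ 2 + 2 * (a ^ 2 - b ^ 2) + d * (a + b) ^ 2) by (field; lra).
  assert (P1 : 0 <= / d * ((a - b) - d * (a + b)) ^ 2) by (apply Rmult_le_pos; [left; apply Rinv_0_lt_compat; lra|apply pow2_ge_0]).
  assert (P2 : 0 <= / d * ((a - b) + d * (a + b)) ^ 2) by (apply Rmult_le_pos; [left; apply Rinv_0_lt_compat; lra|apply pow2_ge_0]).
  assert (P3 : d * (a + b) ^ 2 <= 2 * (d * (a ^ 2 + b ^ 2))).
  { assert (0 <= d * (a - b) ^ 2) by (apply Rmult_le_pos; [lra|apply pow2_ge_0]).
    assert (E3 : 2 * (d * (a ^ 2 + b ^ 2)) - d * (a + b) ^ 2 = d * (a - b) ^ 2) by ring. lra. }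
  assert (0 <= / d * (a - b) ^ 2) by (apply Rmult_le_pos; [left; apply Rinv_0_lt_compat; lra|apply pow2_ge_0]).
  apply Rabs_le; split; lra.
Qed.

Lemma pt_x R0 u v r d : 0 < d -> 0 < r < R0 ->
  r * Rabs (u r ^ 2 - v r ^ 2) <= R0 ^ 2 * (/ d * Hd u v r + d * (H0 u r + H0 v r)).
Proof.
  intros Hdp Hr. pose proof (sqdiff (u r) (v r) d Hdp) as S.
  assert (Hi : 0 < / r) by (apply Rinv_0_lt_compat; lra).
  apply Rle_trans with (R0 ^ 2 * (/ r * (/ d * (u r - v r) ^ 2 + d * (u r ^ 2 + v r ^ 2)))).
  { apply Rle_trans with (r * (/ d * (u r - v r) ^ 2 + d * (u r ^ 2 + v r ^ 2))).
    apply Rmult_le_compat_l; lra.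
    apply r_le_inv; auto.
    assert (0 <= / d * (u r - v r) ^ 2) by (apply Rmult_le_pos; [left; apply Rinv_0_lt_compat; lra|apply pow2_ge_0]).
    assert (0 <= d * (u r ^ 2 + v r ^ 2)) by (apply Rmult_le_pos; [lra|]; apply Rplus_le_le_0_compat; apply pow2_ge_0).
    lra. }
  apply Rmult_le_compat_l. apply pow2_ge_0.
  unfold Hd, H0.
  assert (0 <= r * (Derive u r - Derive v r) ^ 2) by (apply Rmult_le_pos; [lra|apply pow2_ge_0]).
  assert (0 <= r * Derive u r ^ 2) by (apply Rmult_le_pos; [lra|apply pow2_ge_0]).
  assert (0 <= r * Derive v r ^ 2) by (apply Rmult_le_pos; [lra|apply pow2_ge_0]).
  assert (0 < / d) by (apply Rinv_0_lt_compat; lra).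
  assert (E : / r * (/ d * (u r - v r) ^ 2 + d * (u r ^ 2 + v r ^ 2)) =
     / d * (/ r * (u r - v r) ^ 2) + d * (/ r * u r ^ 2 + / r * v r ^ 2)) by ring.
  rewrite E.
  assert (/ d * (r * (Derive u r - Derive v r) ^ 2) >= 0) by (apply Rle_ge, Rmult_le_pos; lra).
  assert (d * (r * Derive u r ^ 2 + r * Derive v r ^ 2) >= 0) by (apply Rle_ge, Rmult_le_pos; lra).
  assert (E2 : / d * (r * (Derive u r - Derive v r) ^ 2 + / r * (u r - v r) ^ 2) +
    d * (r * Derive u r ^ 2 + / r * u r ^ 2 + (r * Derive v r ^ 2 + / r * v r ^ 2)) =
    (/ d * (/ r * (u r - v r) ^ 2) + d * (/ r * u r ^ 2 + / r * v r ^ 2)) +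
    (/ d * (r * (Derive u r - Derive v r) ^ 2) + d * (r * Derive u r ^ 2 + r * Derive v r ^ 2))) by ring.
  rewrite E2. lra.
Qed.

Lemma pt_D u v r d : 0 < d -> 0 < r ->
  Rabs (r * Derive u r ^ 2 - r * Derive v r ^ 2) <= 1 * (/ d * Hd u v r + d * (H0 u r + H0 v r)).
Proof.
  intros Hdp Hr. pose proof (sqdiff (Derive u r) (Derive v r) d Hdp) as S.
  rewrite <- Rmult_minus_distr_l, Rabs_mult, (Rabs_right r) by lra.
  assert (Hi : 0 < / r) by (apply Rinv_0_lt_compat; lra).
  unfold Hd, H0.
  assert (0 <= / r * (u r - v r) ^ 2) by (apply Rmult_le_pos; [lra|apply pow2_ge_0]).
  assert (0 <= / r * u r ^ 2) by (apply Rmult_le_pos; [lra|apply pow2_ge_0]).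
  assert (0 <= / r * v r ^ 2) by (apply Rmult_le_pos; [lra|apply pow2_ge_0]).
  assert (0 < / d) by (apply Rinv_0_lt_compat; lra).
  assert (r * Rabs (Derive u r ^ 2 - Derive v r ^ 2) <= r * (/ d * (Derive u r - Derive v r) ^ 2 + d * (Derive u r ^ 2 + Derive v r ^ 2)))
    by (apply Rmult_le_compat_l; lra).
  assert (/ d * (/ r * (u r - v r) ^ 2) >= 0) by (apply Rle_ge, Rmult_le_pos; lra).
  assert (d * (/ r * u r ^ 2 + / r * v r ^ 2) >= 0) by (apply Rle_ge, Rmult_le_pos; lra).
  assert (E2 : 1 * (/ d * (r * (Derive u r - Derive v r) ^ 2 + / r * (u r - v r) ^ 2) +
    d * (r * Derive u r ^ 2 + / r * u r ^ 2 + (r * Derive v r ^ 2 + / r * v r ^ 2))) =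
    r * (/ d * (Derive u r - Derive v r) ^ 2 + d * (Derive u r ^ 2 + Derive v r ^ 2)) +
    (/ d * (/ r * (u r - v r) ^ 2) + d * (/ r * u r ^ 2 + / r * v r ^ 2))) by ring.
  rewrite E2. lra.
Qed.

Lemma pt_I u v r d : 0 < d -> 0 < r ->
  Rabs (/ r * u r ^ 2 - / r * v r ^ 2) <= 1 * (/ d * Hd u v r + d * (H0 u r + H0 v r)).
Proof.
  intros Hdp Hr. pose proof (sqdiff (u r) (v r) d Hdp) as S.
  assert (Hi : 0 < / r) by (apply Rinv_0_lt_compat; lra).
  rewrite <- Rmult_minus_distr_l, Rabs_mult, (Rabs_right (/ r)) by lra.
  unfold Hd, H0.
  assert (0 <= r * (Derive u r - Derive v r) ^ 2) by (apply Rmult_le_pos; [lra|apply pow2_ge_0]).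
  assert (0 <= r * Derive u r ^ 2) by (apply Rmult_le_pos; [lra|apply pow2_ge_0]).
  assert (0 <= r * Derive v r ^ 2) by (apply Rmult_le_pos; [lra|apply pow2_ge_0]).
  assert (0 < / d) by (apply Rinv_0_lt_compat; lra).
  assert (/ r * Rabs (u r ^ 2 - v r ^ 2) <= / r * (/ d * (u r - v r) ^ 2 + d * (u r ^ 2 + v r ^ 2)))
    by (apply Rmult_le_compat_l; lra).
  assert (/ d * (r * (Derive u r - Derive v r) ^ 2) >= 0) by (apply Rle_ge, Rmult_le_pos; lra).
  assert (d * (r * Derive u r ^ 2 + r * Derive v r ^ 2) >= 0) by (apply Rle_ge, Rmult_le_pos; lra).
  assert (E2 : 1 * (/ d * (r * (Derive u r - Derive v r) ^ 2 + / r * (u r - v r) ^ 2) +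
    d * (r * Derive u r ^ 2 + / r * u r ^ 2 + (r * Derive v r ^ 2 + / r * v r ^ 2))) =
    / r * (/ d * (u r - v r) ^ 2 + d * (u r ^ 2 + v r ^ 2)) +
    (/ d * (r * (Derive u r - Derive v r) ^ 2) + d * (r * Derive u r ^ 2 + r * Derive v r ^ 2))) by ring.
  rewrite E2. lra.
Qed.

Lemma prod_ge1 P Q : 1 <= P -> 1 <= Q -> 1 <= P * Q.
Proof. intros. assert (0 <= (P - 1) * Q) by (apply Rmult_le_pos; lra). lra. Qed.

Lemma frac_lip1 a s A B : 0 < a -> 0 <= s -> 0 <= A -> 0 <= B ->
  Rabs (s * A / (1 + a * (s * A)) - s * B / (1 + a * (s * B))) <= s * Rabs (A - B).
Proof.
  intros Ha Hs HA HB.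
  assert (H1 : 1 <= 1 + a * (s * A)) by (assert (0 <= a * (s * A)) by (apply Rmult_le_pos; [lra|apply Rmult_le_pos; lra]); lra).
  assert (H2 : 1 <= 1 + a * (s * B)) by (assert (0 <= a * (s * B)) by (apply Rmult_le_pos; [lra|apply Rmult_le_pos; lra]); lra).
  assert (E : s * A / (1 + a * (s * A)) - s * B / (1 + a * (s * B)) =
     (s * (A - B)) * / ((1 + a * (s * A)) * (1 + a * (s * B)))) by (field; lra).
  assert (Hp := prod_ge1 _ _ H1 H2).
  rewrite E, Rabs_mult, Rabs_mult, (Rabs_right s) by lra.
  rewrite (Rabs_right (/ _)). 2: { apply Rle_ge; left; apply Rinv_0_lt_compat; lra. }
  assert (/ ((1 + a * (s * A)) * (1 + a * (s * B))) <= 1).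
  { rewrite <- Rinv_1. apply Rinv_le_contravar; lra. }
  assert (0 <= s * Rabs (A - B)) by (apply Rmult_le_pos; [lra|apply Rabs_pos]).
  apply Rle_trans with (s * Rabs (A - B) * 1). apply Rmult_le_compat_l; auto. lra.
Qed.

Lemma frac_lip2 a A B : 0 < a -> 0 <= A -> 0 <= B ->
  Rabs (A / (1 + a * A) ^ 2 - B / (1 + a * B) ^ 2) <= Rabs (A - B).
Proof.
  intros Ha HA HB.
  assert (H1 : 1 <= 1 + a * A) by (assert (0 <= a * A) by (apply Rmult_le_pos; lra); lra).
  assert (H2 : 1 <= 1 + a * B) by (assert (0 <= a * B) by (apply Rmult_le_pos; lra); lra).
  assert (Hn : Rabs (1 - a ^ 2 * A * B) <= (1 + a * A) * (1 + a * B)).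
  { apply Rabs_le. assert (0 <= a ^ 2 * A * B) by (apply Rmult_le_pos; [apply Rmult_le_pos; [apply pow2_ge_0|lra]|lra]).
    assert (0 <= a * A) by (apply Rmult_le_pos; lra). assert (0 <= a * B) by (apply Rmult_le_pos; lra).
    assert (E : (1 + a * A) * (1 + a * B) = 1 + a * A + a * B + a ^ 2 * A * B) by ring.
    rewrite E. split; lra. }
  set (D1 := 1 + a * A) in *. set (D2 := 1 + a * B) in *.
  assert (E : A / D1 ^ 2 - B / D2 ^ 2 = (A - B) * ((1 - a ^ 2 * A * B) / (D1 ^ 2 * D2 ^ 2))).
  { unfold D1, D2. field. unfold D1, D2 in *. split; apply Rgt_not_eq; lra. }
  rewrite E, Rabs_mult.
  assert (Hq : D1 * D2 <= D1 ^ 2 * D2 ^ 2).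
  { replace (D1 ^ 2 * D2 ^ 2) with ((D1 * D2) * (D1 * D2)) by ring.
    pose proof (prod_ge1 _ _ H1 H2). 
    replace (D1 * D2) with ((D1 * D2) * 1) at 1 by ring. apply Rmult_le_compat_l; lra. }
  assert (Hpos : 0 < D1 ^ 2 * D2 ^ 2) by (apply Rmult_lt_0_compat; apply pow_lt; lra).
  assert (Habs : Rabs ((1 - a ^ 2 * A * B) / (D1 ^ 2 * D2 ^ 2)) <= 1).
  { unfold Rdiv. rewrite Rabs_mult, (Rabs_right (/ _)).
    2: { apply Rle_ge; left; apply Rinv_0_lt_compat; auto. }
    apply Rmult_le_reg_r with (D1 ^ 2 * D2 ^ 2); auto.
    rewrite Rmult_assoc, Rinv_l by lra. lra. }
  pose proof (Rabs_pos (A - B)).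
  apply Rle_trans with (Rabs (A - B) * 1). apply Rmult_le_compat_l; auto. lra.
Qed.

Lemma lim_D R0 s : 0 < R0 -> Hseq R0 s -> ex_finite_lim_seq (fun k => Dq R0 (s k)).
Proof.
  intros HR Hs. pose proof Hs as [Hp _]. unfold Dq.
  apply (cauchy_gen R0 s (fun k r => r * Derive (s k) r ^ 2) 1); auto. lra.
  intros k; apply ex_D; auto.
  intros k l d r Hdp Hr. apply pt_D; lra.
Qed.

Lemma lim_I R0 s : 0 < R0 -> Hseq R0 s -> ex_finite_lim_seq (fun k => Iq R0 (s k)).
Proof.
  intros HR Hs. pose proof Hs as [Hp _]. unfold Iq.
  apply (cauchy_gen R0 s (fun k r => / r * s k r ^ 2) 1); auto. lra.
  intros k; apply ex_I; auto.
  intros k l d r Hdp Hr. apply pt_I; lra.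
Qed.

Lemma lim_B R0 s : 0 < R0 -> Hseq R0 s -> ex_finite_lim_seq (fun k => Bq R0 (s k)).
Proof.
  intros HR Hs. pose proof Hs as [Hp _]. unfold Bq.
  apply (cauchy_gen R0 s (fun k r => r * s k r ^ 2) (R0 ^ 2)); auto. apply pow2_ge_0.
  intros k; apply ex_B; auto.
  intros k l d r Hdp Hr. rewrite <- Rmult_minus_distr_l, Rabs_mult, (Rabs_right r) by lra.
  apply pt_x; lra.
Qed.

Lemma lim_N R0 a sg s : 0 < R0 -> 0 < a -> 0 <= sg -> Hseq R0 s ->
  ex_finite_lim_seq (fun k => Nq R0 a sg (s k)).
Proof.
  intros HR Ha Hsg Hs. pose proof Hs as [Hp _]. unfold Nq.
  apply (cauchy_gen R0 s (fun k r => r * (sg * s k r ^ 2 / (1 + a * (sg * s k r ^ 2)))) (sg * R0 ^ 2)); auto.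
  apply Rmult_le_pos; auto; apply pow2_ge_0.
  intros k; apply ex_N; auto.
  intros k l d r Hdp Hr. rewrite <- Rmult_minus_distr_l, Rabs_mult, (Rabs_right r) by lra.
  pose proof (frac_lip1 a sg (s k r ^ 2) (s l r ^ 2) Ha Hsg (pow2_ge_0 _) (pow2_ge_0 _)).
  pose proof (pt_x R0 (s k) (s l) r d Hdp Hr).
  apply Rle_trans with (r * (sg * Rabs (s k r ^ 2 - s l r ^ 2))).
  apply Rmult_le_compat_l; lra.
  replace (r * (sg * Rabs (s k r ^ 2 - s l r ^ 2))) with (sg * (r * Rabs (s k r ^ 2 - s l r ^ 2))) by ring.
  rewrite Rmult_assoc. apply Rmult_le_compat_l; auto.
Qed.

Lemma lim_Np R0 a s : 0 < R0 -> 0 < a -> Hseq R0 s ->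
  ex_finite_lim_seq (fun k => Np R0 a (s k)).
Proof.
  intros HR Ha Hs. pose proof Hs as [Hp _]. unfold Np.
  apply (cauchy_gen R0 s (fun k r => r * (s k r ^ 2 / (1 + a * s k r ^ 2) ^ 2)) (R0 ^ 2)); auto.
  apply pow2_ge_0.
  intros k; apply ex_Np; auto.
  intros k l d r Hdp Hr. rewrite <- Rmult_minus_distr_l, Rabs_mult, (Rabs_right r) by lra.
  pose proof (frac_lip2 a (s k r ^ 2) (s l r ^ 2) Ha (pow2_ge_0 _) (pow2_ge_0 _)).
  pose proof (pt_x R0 (s k) (s l) r d Hdp Hr).
  apply Rle_trans with (r * Rabs (s k r ^ 2 - s l r ^ 2)); auto.
  apply Rmult_le_compat_l; lra.
Qed.

Definition aJ (m : nat) : R := (-1) ^ m / (INR (fact m)) ^ 2.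

Lemma J0_PS x : J0 x = PSeries aJ ((x / 2) ^ 2).
Proof.
  unfold J0, PSeries. apply Series_ext. intros m. unfold aJ. rewrite pow_mult. reflexivity.
Qed.

Lemma aJ_ratio n : Rabs (aJ (S n) / aJ n) = / INR (S n) * / INR (S n).
Proof.
  pose proof (INR_fact_lt_0 n). pose proof (pos_INR n).
  assert (HS : 0 < INR (S n)) by (rewrite S_INR; lra).
  assert (Hpn : (-1) ^ n <> 0) by (apply pow_nonzero; lra).
  assert (E : aJ (S n) / aJ n = - (/ INR (S n) * / INR (S n))).
  { unfold aJ. rewrite fact_simpl, mult_INR. replace ((-1) ^ S n) with (-1 * (-1) ^ n) by reflexivity. field. repeat split; lra. }
  rewrite E, Rabs_Ropp, Rabs_right; auto.
  apply Rle_ge, Rmult_le_pos; left; apply Rinv_0_lt_compat; auto.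
Qed.

Lemma CVr : CV_radius aJ = p_infty.
Proof.
  apply CV_radius_infinite_DAlembert.
  - intros n. unfold aJ. apply Rmult_integral_contrapositive_currified.
    apply pow_nonzero; lra. apply Rinv_neq_0_compat, pow_nonzero, INR_fact_neq_0.
  - apply (is_lim_seq_ext (fun n => / INR (S n) * / INR (S n))).
    { intros n; rewrite aJ_ratio; auto. }
    replace (Finite 0) with (Finite (0 * 0)) by (f_equal; ring).
    assert (H : is_lim_seq (fun n => / INR (S n)) 0).
    { apply (is_lim_seq_incr_1 (fun n => / INR n)).
      replace (Finite 0) with (Rbar_inv p_infty) by reflexivity.
      apply is_lim_seq_inv. apply is_lim_seq_INR. discriminate. }
    apply is_lim_seq_mult'; auto.
Qed.

Lemma J0_cont x : continuity_pt J0 x.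
Proof.
  assert (E : J0 = comp (PSeries aJ) (fun x => (x / 2) ^ 2)).
  { apply functional_extensionality; intros y. unfold comp. apply J0_PS. }
  rewrite E. apply continuity_pt_comp.
  - apply continuity_pt_filterlim. apply (ex_derive_continuous (fun x => (x / 2) ^ 2)). auto_derive. auto.
  - apply PSeries_continuity. rewrite CVr. simpl; auto.
Qed.

Lemma is_series_zero : is_series (fun _ : nat => 0) 0.
Proof.
  apply is_series_Reals. intros eps Heps. exists 0%nat. intros n _.
  rewrite sum_cte. unfold Rdist. rewrite Rmult_0_l, Rminus_0_r, Rabs_R0. lra.
Qed.

Lemma J0_0 : J0 0 = 1.
Proof.
  assert (Hz : forall n, (-1) ^ S n / INR (fact (S n)) ^ 2 * (0 / 2) ^ (2 * S n) = 0).
  { intros n. replace (0 / 2) with 0 by field. rewrite pow_i by lia. ring. }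
  unfold J0. rewrite Series_incr_1.
  - rewrite Series_ext with (b := fun _ => 0) by apply Hz.
    rewrite (is_series_unique _ 0 is_series_zero). simpl. field.
  - apply ex_series_incr_1. apply ex_series_ext with (a := fun _ => 0).
    + intros n. symmetry. apply Hz.
    + exists 0. apply is_series_zero.
Qed.

Definition UU (m : nat) : R := (9 / 4) ^ S m / INR (fact (S m)) ^ 2.

Lemma UU_pos m : 0 <= UU m.
Proof. unfold UU. apply Rmult_le_pos. apply pow_le; lra. left; apply Rinv_0_lt_compat, pow_lt, INR_fact_lt_0. Qed.

Lemma UU_dec : Un_decreasing UU.
Proof.
  intros m. pose proof (INR_fact_lt_0 (S m)) as HF.
  assert (HN : 2 <= INR (S (S m))) by (rewrite !S_INR; pose proof (pos_INR m); lra).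
  assert (E : UU (S m) = UU m * (9 / 4 / INR (S (S m)) ^ 2)).
  { unfold UU. rewrite (fact_simpl (S m)), mult_INR.
    replace ((9 / 4) ^ S (S m)) with (9 / 4 * (9 / 4) ^ S m) by reflexivity.
    field. split; lra. }
  rewrite E. pose proof (UU_pos m).
  assert (9 / 4 / INR (S (S m)) ^ 2 <= 1).
  { apply Rmult_le_reg_r with (INR (S (S m)) ^ 2). apply pow_lt; lra.
    unfold Rdiv. rewrite Rmult_assoc, Rinv_l by (apply pow_nonzero; lra). nra. }
  apply Rle_trans with (UU m * 1). apply Rmult_le_compat_l; auto. lra.
Qed.

Lemma UU_cv : Un_cv UU 0.
Proof.
  apply is_lim_seq_Reals.
  apply (is_lim_seq_le_le (fun _ => 0) UU (fun m => (9 / 4) ^ S m / INR (fact (S m)))).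
  - intros m. split. apply UU_pos. unfold UU.
    pose proof (INR_fact_lt_0 (S m)) as HF.
    assert (H1 : 1 <= INR (fact (S m))) by (apply (le_INR 1); apply lt_O_fact).
    unfold Rdiv. apply Rmult_le_compat_l. apply pow_le; lra.
    apply Rinv_le_contravar. auto. revert H1. generalize (INR (fact (S m))). intros F HF1. nra.
  - apply is_lim_seq_const.
  - apply (is_lim_seq_incr_1 (fun m => (9 / 4) ^ m / INR (fact m))).
    apply is_lim_seq_Reals. apply cv_speed_pow_fact.
Qed.

Lemma J0_3 : J0 3 < 0.
Proof.
  destruct (alternated_series UU UU_dec UU_cv) as [l Hl].
  pose proof (alternated_series_ineq UU l 1 UU_dec UU_cv Hl) as [Hlo _].
  assert (Hs : is_series (tg_alt UU) l) by (apply is_series_Reals; exact Hl).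
  assert (Hf : forall m, (-1) ^ S m / INR (fact (S m)) ^ 2 * (3 / 2) ^ (2 * S m) = - tg_alt UU m).
  { intros m. unfold tg_alt, UU. rewrite pow_mult.
    replace ((3 / 2) ^ 2) with (9 / 4) by field.
    replace ((-1) ^ S m) with (-1 * (-1) ^ m) by reflexivity.
    pose proof (INR_fact_lt_0 (S m)). field. lra. }
  unfold J0. rewrite Series_incr_1.
  - rewrite Series_ext with (b := fun m => - tg_alt UU m) by apply Hf.
    rewrite Series_opp, (is_series_unique _ l Hs).
    simpl in Hlo. unfold tg_alt, UU in Hlo. simpl in Hlo. simpl.
    lra.
  - apply ex_series_incr_1. apply ex_series_ext with (a := fun m => - tg_alt UU m).
    + intros n. symmetry. apply Hf.
    + exists (- l). apply (is_series_opp (tg_alt UU) l) in Hs. exact Hs.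
Qed.

Lemma r0_lt_3 r0 : first_pos_zero_J0 r0 -> r0 < 3.
Proof.
  intros [Hr0 [HJ Hnz]].
  destruct (Rlt_or_le r0 3) as [H|H]; auto. exfalso.
  assert (Hc : continuity (fun x => - J0 x)).
  { intros x. apply (continuity_pt_opp J0). apply J0_cont. }
  destruct (IVT (fun x => - J0 x) 0 3 Hc ltac:(lra)) as [z [Hz Hz0]].
  { rewrite J0_0. lra. }
  { pose proof J0_3. lra. }
  assert (Jz : J0 z = 0) by lra.
  assert (z <> 0). { intros ->. rewrite J0_0 in Jz. lra. }
  assert (z <> 3). { intros ->. pose proof J0_3. lra. }
  apply (Hnz z); auto. lra.
Qed.

Lemma fin_lim (u : nat -> R) : ex_finite_lim_seq u -> is_lim_seq u (real (Lim_seq u)).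
Proof. intros [l H]. rewrite (is_lim_seq_unique u l H). simpl. auto. Qed.

Lemma lim_le (u v : nat -> R) (lu lv : R) : (forall k, u k <= v k) ->
  is_lim_seq u lu -> is_lim_seq v lv -> lu <= lv.
Proof. intros H H1 H2. exact (is_lim_seq_le u v lu lv H H1 H2). Qed.

Lemma RInt_constR (c a b : R) : RInt (fun _ => c) a b = (b - a) * c.
Proof. rewrite RInt_const. reflexivity. Qed.

Lemma rem_pt a sg x2 : 0 < a -> 0 <= sg -> 0 <= x2 ->
  Rabs (sg * x2 / (1 + a * (sg * x2)) - 1 * x2 / (1 + a * (1 * x2)) - (sg - 1) * (x2 / (1 + a * x2) ^ 2))
  <= (sg - 1) ^ 2 / a.
Proof.
  intros Ha Hs Hx.
  assert (H1 : 1 <= 1 + a * x2) by (assert (0 <= a * x2) by (apply Rmult_le_pos; lra); lra).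
  assert (H2 : 1 <= 1 + a * (sg * x2)) by (assert (0 <= a * (sg * x2)) by (apply Rmult_le_pos; [lra|apply Rmult_le_pos; lra]); lra).
  assert (E : sg * x2 / (1 + a * (sg * x2)) - 1 * x2 / (1 + a * (1 * x2)) - (sg - 1) * (x2 / (1 + a * x2) ^ 2)
     = - ((sg - 1) ^ 2 * (a * x2 ^ 2 / ((1 + a * x2) ^ 2 * (1 + a * (sg * x2)))))).
  { field. split; lra. }
  rewrite E, Rabs_Ropp, Rabs_mult, Rabs_right by (apply Rle_ge, pow2_ge_0).
  rewrite Rabs_right.
  2:{ apply Rle_ge. apply Rmult_le_pos. apply Rmult_le_pos; [lra|apply pow2_ge_0].
      left; apply Rinv_0_lt_compat. apply Rmult_lt_0_compat; [apply pow_lt|]; lra. }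
  set (D := (1 + a * x2) ^ 2 * (1 + a * (sg * x2))).
  assert (Hd : 0 < D) by (apply Rmult_lt_0_compat; [apply pow_lt|]; lra).
  assert (K : a * x2 ^ 2 / D <= / a).
  { apply Rmult_le_reg_l with (a * D). apply Rmult_lt_0_compat; lra.
    replace (a * D * (a * x2 ^ 2 / D)) with ((a * x2) ^ 2) by (field; lra).
    replace (a * D * / a) with D by (field; lra).
    assert (0 <= a * x2) by (apply Rmult_le_pos; lra).
    assert ((a * x2) ^ 2 <= (1 + a * x2) ^ 2) by nra.
    assert (0 <= (1 + a * x2) ^ 2) by apply pow2_ge_0.
    unfold D. apply Rle_trans with ((1 + a * x2) ^ 2 * 1). lra. apply Rmult_le_compat_l; lra. }
  unfold Rdiv at 2. apply Rmult_le_compat_l. apply pow2_ge_0. exact K.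
Qed.

Lemma Nrem_k R0 a sg u : 0 < R0 -> 0 < a -> 0 <= sg -> preH R0 u ->
  Rabs (Nq R0 a sg u - Nq R0 a 1 u - (sg - 1) * Np R0 a u) <= R0 * (R0 * ((sg - 1) ^ 2 / a)).
Proof.
  intros HR Ha Hs HP.
  pose proof (ex_N R0 a sg u HR Ha Hs HP) as E1.
  pose proof (ex_N R0 a 1 u HR Ha ltac:(lra) HP) as E2.
  pose proof (ex_Np R0 a u HR Ha HP) as E3.
  unfold Nq, Np.
  rewrite <- RInt_minus', <- RInt_scal', <- RInt_minus'; try exri.
  set (E := fun r => r * (sg * u r ^ 2 / (1 + a * (sg * u r ^ 2))) - r * (1 * u r ^ 2 / (1 + a * (1 * u r ^ 2))) -
                 (sg - 1) * (r * (u r ^ 2 / (1 + a * u r ^ 2) ^ 2))).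
  assert (HE : ex_RInt E 0 R0) by (unfold E; exri).
  assert (Hpt : forall r, 0 < r < R0 -> Rabs (E r) <= R0 * ((sg - 1) ^ 2 / a)).
  { intros r Hr. unfold E.
    replace (r * (sg * u r ^ 2 / (1 + a * (sg * u r ^ 2))) - r * (1 * u r ^ 2 / (1 + a * (1 * u r ^ 2))) -
        (sg - 1) * (r * (u r ^ 2 / (1 + a * u r ^ 2) ^ 2))) with
      (r * (sg * u r ^ 2 / (1 + a * (sg * u r ^ 2)) - 1 * u r ^ 2 / (1 + a * (1 * u r ^ 2)) -
        (sg - 1) * (u r ^ 2 / (1 + a * u r ^ 2) ^ 2))) by ring.
    rewrite Rabs_mult, (Rabs_right r) by lra.
    pose proof (rem_pt a sg (u r ^ 2) Ha Hs (pow2_ge_0 _)).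
    assert (0 <= (sg - 1) ^ 2 / a) by (apply Rmult_le_pos; [apply pow2_ge_0|left; apply Rinv_0_lt_compat; lra]).
    apply Rle_trans with (r * ((sg - 1) ^ 2 / a)). apply Rmult_le_compat_l; lra.
    apply Rmult_le_compat_r; lra. }
  assert (Hup : RInt E 0 R0 <= RInt (fun _ => R0 * ((sg - 1) ^ 2 / a)) 0 R0).
  { apply RInt_le; auto. lra. apply ex_RInt_const. intros r Hr. pose proof (Hpt r Hr).
    pose proof (Rle_abs (E r)). lra. }
  assert (Hlo : RInt (fun _ => - (R0 * ((sg - 1) ^ 2 / a))) 0 R0 <= RInt E 0 R0).
  { apply RInt_le; auto. lra. apply ex_RInt_const. intros r Hr. pose proof (Hpt r Hr).
    pose proof (Rle_abs (- E r)) as HH. rewrite Rabs_Ropp in HH. lra. }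
  rewrite RInt_constR in Hup, Hlo.
  assert (0 <= (sg - 1) ^ 2 / a) by (apply Rmult_le_pos; [apply pow2_ge_0|left; apply Rinv_0_lt_compat; lra]).
  assert (0 <= R0 * ((sg - 1) ^ 2 / a)) by (apply Rmult_le_pos; lra).
  apply Rabs_le. split.
  - replace (- (R0 * (R0 * ((sg - 1) ^ 2 / a)))) with ((R0 - 0) * - (R0 * ((sg - 1) ^ 2 / a))) by ring. auto.
  - replace (R0 * (R0 * ((sg - 1) ^ 2 / a))) with ((R0 - 0) * (R0 * ((sg - 1) ^ 2 / a))) by ring. auto.
Qed.

Lemma deriv_bound (phi : R -> R) L C : 0 <= C ->
  (forall t, Rabs t <= 1 -> Rabs (phi t - phi 0 - t * L) <= C * t ^ 2) -> is_derive phi 0 L.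
Proof.
  intros HC H. apply is_derive_Reals. intros eps Heps.
  assert (Hd : 0 < Rmin 1 (eps / (C + 1))).
  { apply Rmin_pos. lra. apply Rdiv_lt_0_compat; lra. }
  exists (mkposreal _ Hd). intros h Hh0 Hh. simpl in Hh.
  assert (Hh1 : Rabs h <= 1) by (pose proof (Rmin_l 1 (eps / (C + 1))); lra).
  assert (Hh2 : Rabs h < eps / (C + 1)) by (pose proof (Rmin_r 1 (eps / (C + 1))); lra).
  specialize (H h Hh1). rewrite Rplus_0_l.
  assert (E : (phi h - phi 0) / h - L = (phi h - phi 0 - h * L) / h) by (field; auto).
  rewrite E. unfold Rdiv. rewrite Rabs_mult, Rabs_Rinv by auto.
  assert (Hah : 0 < Rabs h) by (apply Rabs_pos_lt; auto).
  apply Rle_lt_trans with (C * h ^ 2 * / Rabs h).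
  { apply Rmult_le_compat_r; auto. left; apply Rinv_0_lt_compat; auto. }
  replace (C * h ^ 2 * / Rabs h) with (C * Rabs h).
  2:{ rewrite <- (pow2_abs h). field. lra. }
  apply Rle_lt_trans with ((C + 1) * Rabs h). nra.
  apply Rmult_lt_reg_l with (/ (C + 1)). apply Rinv_0_lt_compat; lra.
  rewrite <- Rmult_assoc, Rinv_l, Rmult_1_l by lra. 
  replace (/ (C + 1) * eps) with (eps / (C + 1)) by (unfold Rdiv; ring). auto.
Qed.

Ltac limtac :=
  lazymatch goal with
  | |- is_lim_seq (fun k => @?f k + @?g k) (Finite (?a + ?b)) => apply (is_lim_seq_plus' f g a b); limtac
  | |- is_lim_seq (fun k => @?f k - @?g k) (Finite (?a - ?b)) => apply (is_lim_seq_minus' f g a b); limtac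
  | |- is_lim_seq (fun k => @?f k * @?g k) (Finite (?a * ?b)) => apply (is_lim_seq_mult' f g a b); limtac
  | |- _ => first [assumption | apply is_lim_seq_const | idtac]
  end.

Lemma nn_ge1 (n : Z) : (1 <= Z.abs n)%Z -> 1 <= IZR n ^ 2.
Proof.
  intros H. apply IZR_le in H. rewrite abs_IZR in H.
  rewrite <- (pow2_abs (IZR n)). nra.
Qed.

Theorem lemma4p3 (r0 : R) (n : Z) (alpha R0 kappa : R) :
  first_pos_zero_J0 r0 ->
  (1 <= Z.abs n)%Z ->
  0 < alpha -> 0 < R0 ->
  - ((r0 ^ 2 + (IZR n) ^ 2) / (2 * R0 ^ 2)) < kappa ->
  kappa < / alpha - (r0 ^ 2 + (IZR n) ^ 2) / (2 * R0 ^ 2) ->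
  exists C2 : R, 0 < C2 /\
    forall s : nat -> R -> R, in_M n alpha kappa R0 s ->
      dgamma_u_u n alpha kappa R0 s < - C2.
Proof.
  intros Hr0 Hn Ha HR Hk1 Hk2.
  pose proof (r0_lt_3 r0 Hr0) as Hr3.
  destruct Hr0 as [Hr0p _].
  pose proof (nn_ge1 n Hn) as Hnn.
  set (nn := IZR n ^ 2) in *.
  assert (HR2 : 0 < R0 ^ 2) by (apply pow_lt; auto).
  set (iR := / R0 ^ 2).
  assert (HiR : 0 < iR) by (apply Rinv_0_lt_compat; auto).
  set (mu := (r0 ^ 2 + nn) * iR).
  assert (Hmu : 0 < mu) by (unfold mu; apply Rmult_lt_0_compat; auto; nra).
  assert (Hk : - mu < 2 * kappa).
  { unfold mu, iR. replace ((r0 ^ 2 + nn) / (2 * R0 ^ 2)) with ((r0 ^ 2 + nn) * / R0 ^ 2 / 2) in Hk1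
      by (field; lra). lra. }
  set (c := Rmin 1 (1 + 2 * kappa / mu)).
  assert (Hc : 0 < c).
  { unfold c. apply Rmin_pos. lra.
    assert (- 1 < 2 * kappa / mu).
    { apply Rmult_lt_reg_r with mu; auto. unfold Rdiv. rewrite Rmult_assoc, Rinv_l by lra. lra. }
    lra. }
  assert (Hc1 : c <= 1) by apply Rmin_l.
  assert (Hcm : - (2 * kappa) <= (1 - c) * mu).
  { unfold c. destruct (Rle_dec 1 (1 + 2 * kappa / mu)) as [H|H].
    - rewrite Rmin_left by auto. assert (0 <= 2 * kappa / mu) by lra.
      assert (0 <= 2 * kappa).
      { replace (2 * kappa) with (2 * kappa / mu * mu) by (field; lra). apply Rmult_le_pos; lra. }
      lra.
    - rewrite Rmin_right by lra. right. field. lra. }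
  set (Q0 := c / (2 * R0 ^ 2)).
  assert (HQ0 : 0 < Q0) by (unfold Q0; apply Rdiv_lt_0_compat; lra).
  set (C2 := c * Q0 / (2 * (1 + alpha * Q0))).
  assert (HC2 : 0 < C2).
  { unfold C2. apply Rdiv_lt_0_compat. apply Rmult_lt_0_compat; auto.
    assert (0 < alpha * Q0) by (apply Rmult_lt_0_compat; auto). lra. }
  exists C2. split; auto.
  intros s [Hs [Hnz Hg]].
  pose proof Hs as [Hp _].
  destruct (lim_D R0 s HR Hs) as [lD HD].
  destruct (lim_I R0 s HR Hs) as [lI HI].
  destruct (lim_B R0 s HR Hs) as [lB HB].
  destruct (lim_N R0 alpha 1 s HR Ha ltac:(lra) Hs) as [lN1 HN1].
  destruct (lim_Np R0 alpha s HR Ha Hs) as [lNp HNp].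
  set (LN := fun sg => real (Lim_seq (fun k => Nq R0 alpha sg (s k)))).
  assert (HLN : forall sg, 0 <= sg -> is_lim_seq (fun k => Nq R0 alpha sg (s k)) (LN sg)).
  { intros sg Hsg. apply fin_lim, lim_N; auto. }
  assert (LN1 : LN 1 = lN1) by (unfold LN; rewrite (is_lim_seq_unique _ _ HN1); reflexivity).
  set (P0 := lD + nn * lI - 2 * (/ alpha - kappa) * lB).
  assert (HG : forall t, gammaH n alpha kappa R0 (fun k x => (1 + t) * s k x) =
                 / 2 * ((1 + t) ^ 2 * P0 + 2 * / alpha * LN ((1 + t) ^ 2))).
  { intros t. unfold gammaH.
    rewrite (Lim_seq_ext _ (fun k => / 2 * ((1 + t) ^ 2 * Dq R0 (s k) + nn * ((1 + t) ^ 2 * Iq R0 (s k))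
        - 2 * (/ alpha - kappa) * ((1 + t) ^ 2 * Bq R0 (s k)) + 2 * / alpha * Nq R0 alpha ((1 + t) ^ 2) (s k)))).
    2:{ intros k. apply gamma_scaled; auto. }
    pose proof (HLN ((1 + t) ^ 2) (pow2_ge_0 _)) as HLt.
    rewrite (is_lim_seq_unique _ (/ 2 * ((1 + t) ^ 2 * lD + nn * ((1 + t) ^ 2 * lI)
        - 2 * (/ alpha - kappa) * ((1 + t) ^ 2 * lB) + 2 * / alpha * LN ((1 + t) ^ 2)))).
    - simpl. unfold P0. ring.
    - limtac. }
  assert (HG0 : / 2 * (P0 + 2 * / alpha * lN1) = 0).
  { pose proof (HG 0) as H0'.
    replace (fun k x => (1 + 0) * s k x) with s in H0'.
    2:{ apply functional_extensionality; intros k. apply functional_extensionality; intros x. ring. }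
    rewrite Hg in H0'. replace ((1 + 0) ^ 2) with 1 in H0' by ring. rewrite LN1 in H0'.
    rewrite H0'. ring. }
  assert (HRem : forall sg, 0 <= sg -> Rabs (LN sg - lN1 - (sg - 1) * lNp) <= R0 * (R0 * ((sg - 1) ^ 2 / alpha))).
  { intros sg Hsg. pose proof (HLN sg Hsg) as Hl.
    assert (Hw : is_lim_seq (fun k => Nq R0 alpha sg (s k) - Nq R0 alpha 1 (s k) - (sg - 1) * Np R0 alpha (s k))
                  (LN sg - lN1 - (sg - 1) * lNp)) by limtac.
    assert (Hb : forall k, Rabs (Nq R0 alpha sg (s k) - Nq R0 alpha 1 (s k) - (sg - 1) * Np R0 alpha (s k))
                  <= R0 * (R0 * ((sg - 1) ^ 2 / alpha))) by (intros; apply Nrem_k; auto).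
    apply Rabs_le. split.
    - apply (lim_le (fun _ => - (R0 * (R0 * ((sg - 1) ^ 2 / alpha))))
        (fun k => Nq R0 alpha sg (s k) - Nq R0 alpha 1 (s k) - (sg - 1) * Np R0 alpha (s k))); auto.
      intros k. pose proof (Hb k) as Hbk. apply Rabs_le_between in Hbk. lra. apply is_lim_seq_const.
    - apply (lim_le (fun k => Nq R0 alpha sg (s k) - Nq R0 alpha 1 (s k) - (sg - 1) * Np R0 alpha (s k))
        (fun _ => R0 * (R0 * ((sg - 1) ^ 2 / alpha)))); auto.
      intros k. pose proof (Hb k) as Hbk. apply Rabs_le_between in Hbk. lra. apply is_lim_seq_const. }
  set (L := P0 + 2 * / alpha * lNp).
  assert (Hder : is_derive (fun t => / 2 * ((1 + t) ^ 2 * P0 + 2 * / alpha * LN ((1 + t) ^ 2))) 0 L).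
  { apply deriv_bound with (C := Rabs P0 / 2 + Rabs lNp / alpha + 9 * R0 ^ 2 / alpha ^ 2).
    { assert (0 <= Rabs P0 / 2) by (apply Rmult_le_pos; [apply Rabs_pos|lra]).
      assert (0 <= Rabs lNp / alpha) by (apply Rmult_le_pos; [apply Rabs_pos|left; apply Rinv_0_lt_compat; lra]).
      assert (0 <= 9 * R0 ^ 2 / alpha ^ 2).
      { apply Rmult_le_pos. apply Rmult_le_pos; [lra|apply pow2_ge_0]. left; apply Rinv_0_lt_compat, pow_lt; lra. }
      lra. }
    intros t Ht. cbv beta.
    pose proof (HRem ((1 + t) ^ 2) (pow2_ge_0 _)) as Hr.
    set (Rm := LN ((1 + t) ^ 2) - lN1 - ((1 + t) ^ 2 - 1) * lNp) in Hr.
    assert (E : / 2 * ((1 + t) ^ 2 * P0 + 2 * / alpha * LN ((1 + t) ^ 2)) -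
                / 2 * ((1 + 0) ^ 2 * P0 + 2 * / alpha * LN ((1 + 0) ^ 2)) - t * L =
                / 2 * t ^ 2 * P0 + / alpha * (Rm + t ^ 2 * lNp)).
    { replace ((1 + 0) ^ 2) with 1 by ring. rewrite LN1. unfold Rm, L. field. lra. }
    rewrite E.
    apply Rabs_le_between in Ht.
    assert (Hs2 : ((1 + t) ^ 2 - 1) ^ 2 <= 9 * t ^ 2).
    { replace (((1 + t) ^ 2 - 1) ^ 2) with (t ^ 2 * (2 + t) ^ 2) by ring.
      assert ((2 + t) ^ 2 <= 9) by nra.
      assert (0 <= t ^ 2) by apply pow2_ge_0. nra. }
    assert (HRm : Rabs Rm <= 9 * R0 ^ 2 / alpha * t ^ 2).
    { eapply Rle_trans; [apply Hr|].
      replace (R0 * (R0 * (((1 + t) ^ 2 - 1) ^ 2 / alpha))) with (R0 ^ 2 / alpha * ((1 + t) ^ 2 - 1) ^ 2) by (field; lra).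
      replace (9 * R0 ^ 2 / alpha * t ^ 2) with (R0 ^ 2 / alpha * (9 * t ^ 2)) by (field; lra).
      apply Rmult_le_compat_l. apply Rmult_le_pos; [apply pow2_ge_0|left; apply Rinv_0_lt_compat; lra].
      auto. }
    assert (Hia : 0 < / alpha) by (apply Rinv_0_lt_compat; lra).
    assert (Ht2 : 0 <= t ^ 2) by apply pow2_ge_0.
    eapply Rle_trans; [apply Rabs_triang|].
    rewrite !Rabs_mult, (Rabs_right (/ 2)), (Rabs_right (t ^ 2)), (Rabs_right (/ alpha)) by lra.
    assert (H1 : Rabs (Rm + t ^ 2 * lNp) <= 9 * R0 ^ 2 / alpha * t ^ 2 + t ^ 2 * Rabs lNp).
    { eapply Rle_trans; [apply Rabs_triang|]. rewrite Rabs_mult, (Rabs_right (t ^ 2)) by lra. lra. }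
    assert (H2 : / alpha * Rabs (Rm + t ^ 2 * lNp) <= / alpha * (9 * R0 ^ 2 / alpha * t ^ 2 + t ^ 2 * Rabs lNp))
      by (apply Rmult_le_compat_l; lra).
    assert (E2 : (Rabs P0 / 2 + Rabs lNp / alpha + 9 * R0 ^ 2 / alpha ^ 2) * t ^ 2 =
       / 2 * t ^ 2 * Rabs P0 + / alpha * (9 * R0 ^ 2 / alpha * t ^ 2 + t ^ 2 * Rabs lNp)) by (field; lra).
    rewrite E2. lra. }
  assert (Hdg : dgamma_u_u n alpha kappa R0 s = L).
  { assert (Ef : (fun t => gammaH n alpha kappa R0 (fun k x => (1 + t) * s k x)) =
                 (fun t => / 2 * ((1 + t) ^ 2 * P0 + 2 * / alpha * LN ((1 + t) ^ 2))))
      by (apply functional_extensionality; exact HG).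
    unfold dgamma_u_u. rewrite Ef. apply is_derive_unique; auto. }
  rewrite Hdg.
  set (lQ := lD + lI).
  assert (HQ : is_lim_seq (fun k => normH2 R0 (s k)) lQ).
  { apply (is_lim_seq_ext (fun k => Dq R0 (s k) + Iq R0 (s k))).
    intros k; symmetry; apply normH2_split; auto. unfold lQ; limtac. }
  assert (HQne : lQ <> 0).
  { intros E. apply Hnz. rewrite E in HQ. exact HQ. }
  assert (HD0 : 0 <= lD).
  { apply (lim_le (fun _ => 0) (fun k => Dq R0 (s k))); auto. intros; apply Dq_ge0; auto. apply is_lim_seq_const. }
  assert (HI0 : 0 <= lI).
  { apply (lim_le (fun _ => 0) (fun k => Iq R0 (s k))); auto. intros; apply Iq_ge0; auto. apply is_lim_seq_const. }
  assert (HB0 : 0 <= lB).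
  { apply (lim_le (fun _ => 0) (fun k => Bq R0 (s k))); auto. intros; apply Bq_ge0; auto. apply is_lim_seq_const. }
  assert (HQp : 0 < lQ) by (unfold lQ in *; lra).
  assert (Hpoin : 10 / R0 ^ 2 * lB <= lQ).
  { apply (lim_le (fun k => 10 / R0 ^ 2 * Bq R0 (s k)) (fun k => normH2 R0 (s k))); auto.
    intros; apply poincare; auto. limtac. }
  assert (HBI : lB <= R0 ^ 2 * lI).
  { apply (lim_le (fun k => Bq R0 (s k)) (fun k => R0 ^ 2 * Iq R0 (s k))); auto.
    intros; apply BI; auto. limtac. }
  assert (HF1 : (lB - lN1) * / alpha <= R0 ^ 2 * (lQ * lQ)).
  { apply (lim_le (fun k => (Bq R0 (s k) - Nq R0 alpha 1 (s k)) * / alpha)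
                  (fun k => R0 ^ 2 * (normH2 R0 (s k) * normH2 R0 (s k)))).
    - intros k. rewrite (NF_id R0 alpha (s k)) by auto.
      replace (alpha * Fq R0 alpha (s k) * / alpha) with (Fq R0 alpha (s k)) by (field; lra).
      pose proof (F_bound1 R0 alpha (s k) HR Ha (Hp k)). simpl in H. lra.
    - limtac.
    - limtac. }
  assert (HF2 : (lB - lN1) * / alpha <= (1 + alpha * lQ) * ((lN1 - lNp) * / alpha)).
  { apply (lim_le (fun k => (Bq R0 (s k) - Nq R0 alpha 1 (s k)) * / alpha)
                  (fun k => (1 + alpha * normH2 R0 (s k)) * ((Nq R0 alpha 1 (s k) - Np R0 alpha (s k)) * / alpha))).
    - intros k. rewrite (NF_id R0 alpha (s k)), (ND_id R0 alpha (s k)) by auto.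
      replace (alpha * Fq R0 alpha (s k) * / alpha) with (Fq R0 alpha (s k)) by (field; lra).
      replace (alpha * Dd R0 alpha (s k) * / alpha) with (Dd R0 alpha (s k)) by (field; lra).
      apply F_bound2; auto.
    - limtac.
    - limtac. }
  set (F := (lB - lN1) * / alpha) in *.
  set (Dl := (lN1 - lNp) * / alpha) in *.
  assert (HLD : L = - 2 * Dl).
  { unfold L, Dl. unfold Rminus. ring_simplify. 
    assert (P0 = - (2 * / alpha * lN1)) by lra. rewrite H. ring. }
  assert (HP0F : lD + nn * lI + 2 * kappa * lB = 2 * F).
  { unfold F. assert (P0 = - (2 * / alpha * lN1)) by lra. unfold P0 in H. 
    replace (2 * ((lB - lN1) * / alpha)) with (2 * / alpha * lB - 2 * / alpha * lN1) by ring. lra. }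
  assert (Hcoer : c * lQ <= lD + nn * lI + 2 * kappa * lB).
  { assert (s1 : (1 - c) * (10 * iR * lB) <= (1 - c) * lQ).
    { apply Rmult_le_compat_l. lra. unfold iR. replace (10 * / R0 ^ 2 * lB) with (10 / R0 ^ 2 * lB) by (unfold Rdiv; ring). auto. }
    assert (s2 : (nn - 1) * (iR * lB) <= (nn - 1) * lI).
    { apply Rmult_le_compat_l. lra. unfold iR.
      apply Rmult_le_reg_l with (R0 ^ 2); auto. rewrite <- Rmult_assoc, Rinv_r, Rmult_1_l by lra. auto. }
    assert (s3 : 0 <= lB * iR * ((1 - c) * (9 - r0 ^ 2) + c * (nn - 1))).
    { apply Rmult_le_pos. apply Rmult_le_pos; lra.
      assert (0 <= (1 - c) * (9 - r0 ^ 2)) by (apply Rmult_le_pos; nra).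
      assert (0 <= c * (nn - 1)) by (apply Rmult_le_pos; lra). lra. }
    assert (s4 : - (2 * kappa) * lB <= (1 - c) * mu * lB) by (apply Rmult_le_compat_r; lra).
    unfold mu in s4. unfold lQ in *. nra. }
  assert (HQ0le : Q0 <= lQ).
  { assert (c * lQ <= 2 * R0 ^ 2 * lQ * lQ) by lra.
    assert (c <= 2 * R0 ^ 2 * lQ).
    { apply Rmult_le_reg_r with lQ; auto; lra. }
    unfold Q0. apply Rmult_le_reg_l with (2 * R0 ^ 2). lra.
    replace (2 * R0 ^ 2 * (c / (2 * R0 ^ 2))) with c by (field; lra). lra. }
  assert (HDl : c * lQ <= 2 * (1 + alpha * lQ) * Dl) by lra.
  assert (Hal : 0 < alpha * Q0) by (apply Rmult_lt_0_compat; auto).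
  assert (HalQ : alpha * Q0 <= alpha * lQ) by (apply Rmult_le_compat_l; lra).
  assert (HDl0 : 0 < Dl).
  { assert (0 < c * lQ) by (apply Rmult_lt_0_compat; auto).
    destruct (Rle_or_lt Dl 0) as [Hx|Hx]; auto.
    assert (0 <= 2 * (1 + alpha * lQ) * (- Dl)) by (apply Rmult_le_pos; lra). lra. }
  assert (HC2Dl : C2 <= Dl).
  { unfold C2. apply Rmult_le_reg_r with (2 * (1 + alpha * Q0)). lra.
    unfold Rdiv. rewrite Rmult_assoc, Rinv_l, Rmult_1_r by lra.
    apply Rmult_le_reg_r with (1 + alpha * lQ). lra.
    assert (A1 : c * Q0 * (1 + alpha * lQ) <= c * lQ * (1 + alpha * Q0)).
    { assert (c * Q0 <= c * lQ) by (apply Rmult_le_compat_l; lra).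
      replace (c * Q0 * (1 + alpha * lQ)) with (c * Q0 + c * Q0 * (alpha * lQ)) by ring.
      replace (c * lQ * (1 + alpha * Q0)) with (c * lQ + c * Q0 * (alpha * lQ)) by ring. lra. }
    assert (A2 : c * lQ * (1 + alpha * Q0) <= 2 * (1 + alpha * lQ) * Dl * (1 + alpha * Q0))
      by (apply Rmult_le_compat_r; lra).
    replace (Dl * (2 * (1 + alpha * Q0)) * (1 + alpha * lQ)) with (2 * (1 + alpha * lQ) * Dl * (1 + alpha * Q0)) by ring.
    lra. }
  rewrite HLD. lra.
Qed.
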